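(* The function $w:\mathbb{R}\times[0,\bar{y}]\to\mathbb{R}$ defined in the context belongs to $C^{2,1}(\mathbb{R}\times[0,\bar{y}])$, i.e. $w$, $w_x$, $w_{xx}$ and $w_y$ exist and are continuous on $\mathbb{R}\times[0,\bar{y}]$.
   Context: Fix constants $\mu\in\mathbb{R}$, $\kappa>0$, $\sigma>0$, $\rho>0$, $\beta>0$, $c\geq0$, $\bar{y}>0$. Let $D_\alpha(x)=\frac{e^{-x^2/4}}{\Gamma(-\alpha)}\int_0^\infty t^{-\alpha-1}e^{-t^2/2-xt}dt$ ($\alpha<0$) and $\psi(x)=e^{\frac{\kappa(x-\mu)^2}{2\sigma^2}}D_{-\rho/\kappa}\big(-\frac{x-\mu}{\sigma}\sqrt{2\kappa}\big)$, the strictly increasing positive solution of $\frac{\sigma^2}{2}u''+\kappa(\mu-x)u'-\rho u=0$. Let $R(x,y)=\frac{xy}{\rho+\kappa}+\frac{\mu\kappa y}{\rho(\rho+\kappa)}-\frac{\kappa\beta y^2}{\rho(\rho+\kappa)}$, $\tilde{R}(x,y)=\frac{\mu\kappa+\rho x-\beta(\rho+2\kappa)y}{\rho(\rho+\kappa)}$, $Q_k(z)=\psi^{(k)}(z)\psi^{(k+2)}(z)-\psi^{(k+1)}(z)^2$. Let $\tilde{x}$ be the unique real zero of $H(x)=\psi'(x)(c-\tilde{R}(x,\bar{y}))+(\rho+\kappa)^{-1}\psi(x)$. Let $D(y,z)=\psi(z)\big[(\rho+\kappa)(c-\tilde{R}(z,y))Q_1(z)+Q_0'(z)\big]$, $N(y,z)=Q_0(z)\Big(\frac{\rho+2\kappa}{\rho}\psi'(z)+(\rho+\kappa)(c-\tilde{R}(z,y))\psi''(z)+\psi'(z)\Big)$,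 $\mathcal{G}=\beta N/D$. Let $\tilde{F}$ be the unique solution on $[0,\bar{y}]$ of $\tilde{F}'(y)=\mathcal{G}(y,\tilde{F}(y))$, $\tilde{F}(\bar{y})=\tilde{x}$; $F(y)=\tilde{F}(y)-\beta y$ is strictly increasing, with inverse $F^{-1}:[F(0),\bar{x}]\to[0,\bar{y}]$, where $\bar{x}=F(\bar{y})=\tilde{x}-\beta\bar{y}$. Let $A(y)=\dfrac{\psi'(\tilde{F}(y))\big(c-\tilde{R}(\tilde{F}(y),y)\big)+(\rho+\kappa)^{-1}\psi(\tilde{F}(y))}{-\beta\,Q_0(\tilde{F}(y))}$ for $y\in[0,\bar{y}]$. Set $\mathbb{W}=\{(x,y):y\in[0,\bar{y}),x<F(y)\}$, $\mathbb{I}_1=\{(x,y):y\in[0,\bar{y}),F(y)\leq x<\bar{x}\}$, $\mathbb{I}_2=\{(x,y):y\in[0,\bar{y}),x\geq\bar{x}\}$. Define $w(x,y)=A(y)\psi(x+\beta y)+R(x,y)$ if $(x,y)\in\mathbb{W}$ or ($y=\bar{y}$, $x<\bar{x}$); $w(x,y)=A(F^{-1}(x))\psi(x+\beta F^{-1}(x))+R(x,F^{-1}(x))-c(F^{-1}(x)-y)$ if $(x,y)\in\mathbb{I}_1$; $w(x,y)=R(x,\bar{y})-c(\bar{y}-y)$ if $(x,y)\in\mathbb{I}_2$ or ($y=\bar{y}$, $x\geq\bar{x}$). *)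

(* Defs.v *)
From Stdlib Require Import Reals ClassicalEpsilon.
From Coquelicot Require Import Coquelicot.
Open Scope R_scope.

Definition Gamma_fn (s : R) : R :=
  RInt_gen (fun t => Rpower t (s - 1) * exp (- t)) (at_right 0) (Rbar_locally p_infty).

(* Parabolic cylinder function D_alpha (alpha < 0), integral representation. *)
Definition Dpc (alpha x : R) : R :=
  exp (- x ^ 2 / 4) / Gamma_fn (- alpha) *
  RInt_gen (fun t => Rpower t (- alpha - 1) * exp (- t ^ 2 / 2 - x * t))
           (at_right 0) (Rbar_locally p_infty).

Record Params := mkParams {
  p_mu : R; p_kappa : R; p_sigma : R; p_rho : R; p_beta : R; p_c : R; p_ybar : R }.

Section Model.
Variable p : Params.
Local Notation mu := (p_mu p). Local Notation kappa := (p_kappa p).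
Local Notation sigma := (p_sigma p). Local Notation rho := (p_rho p).
Local Notation beta := (p_beta p). Local Notation c := (p_c p).
Local Notation ybar := (p_ybar p).

Definition psi (x : R) : R :=
  exp (kappa * (x - mu) ^ 2 / (2 * sigma ^ 2)) *
  Dpc (- rho / kappa) (- (x - mu) / sigma * sqrt (2 * kappa)).

Definition dpsi (k : nat) (x : R) : R := Derive_n psi k x.

Definition Rfun (x y : R) : R :=
  x * y / (rho + kappa) + mu * kappa * y / (rho * (rho + kappa))
  - kappa * beta * y ^ 2 / (rho * (rho + kappa)).

Definition Rtilde (x y : R) : R :=
  (mu * kappa + rho * x - beta * (rho + 2 * kappa) * y) / (rho * (rho + kappa)).

Definition Qk (k : nat) (z : R) : R :=
  dpsi k z * dpsi (k + 2) z - (dpsi (k + 1) z) ^ 2.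

Definition Hfun (x : R) : R :=
  dpsi 1 x * (c - Rtilde x ybar) + / (rho + kappa) * psi x.

Definition Dfun (y z : R) : R :=
  psi z * ((rho + kappa) * (c - Rtilde z y) * Qk 1 z + Derive (Qk 0) z).

Definition Nfun (y z : R) : R :=
  Qk 0 z * ((rho + 2 * kappa) / rho * dpsi 1 z
            + (rho + kappa) * (c - Rtilde z y) * dpsi 2 z + dpsi 1 z).

Definition Gfun (y z : R) : R := beta * Nfun y z / Dfun y z.

Definition Ffun (Ft : R -> R) (y : R) : R := Ft y - beta * y.

Definition xbar (Ft : R -> R) : R := Ffun Ft ybar.

Definition Finv (Ft : R -> R) (x : R) : R :=
  epsilon (inhabits 0) (fun y => 0 <= y <= ybar /\ Ffun Ft y = x).

Definition Afun (Ft : R -> R) (y : R) : R :=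
  (dpsi 1 (Ft y) * (c - Rtilde (Ft y) y) + / (rho + kappa) * psi (Ft y))
  / (- beta * Qk 0 (Ft y)).

(* The value function w on R x [0, ybar] (values for y outside are irrelevant). *)
Definition wfun (Ft : R -> R) (x y : R) : R :=
  if Rlt_dec y ybar then
    (if Rlt_dec x (Ffun Ft y) then
       Afun Ft y * psi (x + beta * y) + Rfun x y
     else if Rlt_dec x (xbar Ft) then
       let z := Finv Ft x in
       Afun Ft z * psi (x + beta * z) + Rfun x z - c * (z - y)
     else Rfun x ybar - c * (ybar - y))
  else
    (if Rlt_dec x (xbar Ft) then Afun Ft y * psi (x + beta * y) + Rfun x y
     else Rfun x ybar - c * (ybar - y)).

End Model.

Definition deriv_within (f : R -> R) (a b y l : R) : Prop :=
  filterlim (fun h => (f (y + h) - f y) / h)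
            (within (fun h => h <> 0 /\ a <= y + h <= b) (locally 0)) (locally l).

Definition cont_strip (f : R -> R -> R) (yb : R) : Prop :=
  forall x y, 0 <= y <= yb -> forall eps, 0 < eps -> exists delta, 0 < delta /\
    forall x' y', 0 <= y' <= yb -> Rabs (x' - x) < delta -> Rabs (y' - y) < delta ->
      Rabs (f x' y' - f x y) < eps.

Definition C21_strip (w : R -> R -> R) (yb : R) : Prop :=
  exists wx wxx wy : R -> R -> R,
    (forall x y, 0 <= y <= yb ->
       is_derive (fun s => w s y) x (wx x y) /\
       is_derive (fun s => wx s y) x (wxx x y) /\
       deriv_within (fun t => w x t) 0 yb y (wy x y)) /\
    cont_strip w yb /\ cont_strip wx yb /\ cont_strip wxx yb /\ cont_strip wy yb.

(* Main.v *)
Require Import Defs.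
From Stdlib Require Import Reals Lra Lia Psatz ClassicalEpsilon.
From Coquelicot Require Import Coquelicot.
Open Scope R_scope.
Ltac Req := match goal with |- ?a = ?b => change (@eq R a b) end.
Lemma dR_mult (f g : R -> R) x df dg : is_derive f x df -> is_derive g x dg ->
  is_derive (fun t => f t * g t) x (df * g x + f x * dg).
Proof. intros H1 H2. apply (is_derive_mult f g x df dg H1 H2). intros; apply Rmult_comm. Qed.
Lemma dR_plus (f g : R -> R) x df dg : is_derive f x df -> is_derive g x dg ->
  is_derive (fun t => f t + g t) x (df + dg).
Proof. intros H1 H2. apply (is_derive_plus f g x df dg H1 H2). Qed.
Lemma dR_minus (f g : R -> R) x df dg : is_derive f x df -> is_derive g x dg ->
  is_derive (fun t => f t - g t) x (df - dg).
Proof. intros H1 H2. apply (is_derive_minus f g x df dg H1 H2). Qed.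
Lemma dR_comp (f g : R -> R) x df dg : is_derive f (g x) df -> is_derive g x dg ->
  is_derive (fun t => f (g t)) x (df * dg).
Proof. intros H1 H2. rewrite Rmult_comm. apply (is_derive_comp f g x df dg H1 H2). Qed.
Lemma dR_const (k x : R) : is_derive (fun _ => k) x 0.
Proof. apply (is_derive_const k x). Qed.
Lemma dR_id (x : R) : is_derive (fun t => t) x 1.
Proof. apply (is_derive_id x). Qed.
Lemma dR_scal (f : R -> R) x k df : is_derive f x df -> is_derive (fun t => k * f t) x (k * df).
Proof. apply is_derive_scal. Qed.
Lemma dR_exp x : is_derive exp x (exp x).
Proof. apply is_derive_Reals. apply derivable_pt_lim_exp. Qed.
Lemma dR_eq (f : R -> R) (x l l' : R) : is_derive f x l -> @eq R l l' -> is_derive f x l'.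
Proof. intros H ->. exact H. Qed.
Lemma dR_ext (f g : R -> R) x l : (forall t, f t = g t) -> is_derive f x l -> is_derive g x l.
Proof. apply is_derive_ext. Qed.
Lemma dR_cont (f : R -> R) x l : is_derive f x l -> continuous f x.
Proof. intros H. apply (@ex_derive_continuous R_AbsRing R_NormedModule). exists l; exact H. Qed.
Lemma cR_mult (f g : R -> R) x : continuous f x -> continuous g x -> continuous (fun t => f t * g t) x.
Proof. intros H1 H2. apply (@continuous_mult R_UniformSpace R_AbsRing f g x H1 H2). Qed.
Lemma cR_plus (f g : R -> R) x : continuous f x -> continuous g x -> continuous (fun t => f t + g t) x.
Proof. intros H1 H2. apply (@continuous_plus R_UniformSpace R_AbsRing R_NormedModule f g x H1 H2). Qed.
Lemma cR_opp (f : R -> R) x : continuous f x -> continuous (fun t => - f t) x.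
Proof. intros H1. apply (@continuous_opp R_UniformSpace R_AbsRing R_NormedModule f x H1). Qed.
Lemma cR_minus (f g : R -> R) x : continuous f x -> continuous g x -> continuous (fun t => f t - g t) x.
Proof. intros H1 H2. apply (cR_plus f (fun t => - g t)); auto. apply cR_opp; auto. Qed.
Lemma cR_comp (f g : R -> R) x : continuous g x -> continuous f (g x) -> continuous (fun t => f (g t)) x.
Proof. intros H1 H2. apply (@continuous_comp R_UniformSpace R_UniformSpace R_UniformSpace g f x H1 H2). Qed.
Lemma cR_const (k x : R) : continuous (fun _ : R => k) x.
Proof. apply (@continuous_const R_UniformSpace R_UniformSpace k x). Qed.
Lemma cR_id (x : R) : continuous (fun t : R => t) x.
Proof. apply (@continuous_id R_UniformSpace x). Qed.
Lemma cR_exp x : continuous exp x.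
Proof. apply (dR_cont exp x (exp x)). apply dR_exp. Qed.
Lemma cR_ext (f g : R -> R) x : (forall t, f t = g t) -> continuous f x -> continuous g x.
Proof. intros H. apply continuous_ext. auto. Qed.
Lemma cR_pow (f : R -> R) n x : continuous f x -> continuous (fun t => f t ^ n) x.
Proof. intros H. induction n. simpl. apply cR_const. simpl. apply cR_mult; auto. Qed.
Lemma dR_lin (a b x : R) : is_derive (fun s => a * s + b) x a.
Proof. eapply dR_eq. apply dR_plus. apply dR_scal. apply dR_id. apply dR_const. ring. Qed.
Lemma cR_lin (a b x : R) : continuous (fun s => a * s + b) x.
Proof. eapply dR_cont. apply dR_lin. Qed.

Lemma ball_R1 (x y e : R) : @ball R_UniformSpace x e y -> Rabs (y - x) < e.
Proof. exact (fun h => h). Qed.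
Lemma ball_R (x y e : R) : Rabs (y - x) < e -> @ball R_UniformSpace x e y.
Proof. exact (fun h => h). Qed.

Lemma mono_lim_pinfty (Phi : R -> R) (B : R) :
  (forall x y, 1 <= x <= y -> Phi x <= Phi y) ->
  (forall x, 1 <= x -> Phi x <= B) ->
  exists l, filterlim Phi (Rbar_locally p_infty) (locally l).
Proof.
  intros Hm HB.
  set (E := fun v => exists x, 1 <= x /\ v = Phi x).
  assert (Hb : bound E). { exists B. intros v [x [Hx ->]]. apply HB; auto. }
  assert (He : exists v, E v). { exists (Phi 1). exists 1. split; [lra|auto]. }
  destruct (completeness E Hb He) as [l [Hub Hlub]].
  exists l. apply filterlim_locally. intros eps.
  assert (Hx0 : exists x0, 1 <= x0 /\ l - eps < Phi x0).
  { apply NNPP. intros Hn. assert (l <= l - eps).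
    { apply Hlub. intros v [x [Hx ->]]. apply Rnot_lt_le. intros Hc. apply Hn. exists x. auto. }
    destruct eps; simpl in *; lra. }
  destruct Hx0 as [x0 [Hx0 Hl]].
  exists x0. intros x Hx. apply ball_R.
  assert (Phi x0 <= Phi x) by (apply Hm; lra).
  assert (Phi x <= l) by (apply Hub; exists x; split; [lra|auto]).
  apply Rabs_lt_between'. destruct eps; simpl in *; lra.
Qed.

Lemma mono_lim_right0 (Phi : R -> R) (B : R) :
  (forall x y, 0 < x <= y -> y <= 1 -> Phi y <= Phi x) ->
  (forall x, 0 < x <= 1 -> Phi x <= B) ->
  exists l, filterlim Phi (at_right 0) (locally l).
Proof.
  intros Hm HB.
  set (E := fun v => exists x, 0 < x <= 1 /\ v = Phi x).
  assert (Hb : bound E). { exists B. intros v [x [Hx ->]]. apply HB; auto. }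
  assert (He : exists v, E v). { exists (Phi 1). exists 1. split; [lra|auto]. }
  destruct (completeness E Hb He) as [l [Hub Hlub]].
  exists l. apply filterlim_locally. intros eps.
  assert (Hx0 : exists x0, 0 < x0 <= 1 /\ l - eps < Phi x0).
  { apply NNPP. intros Hn. assert (l <= l - eps).
    { apply Hlub. intros v [x [Hx ->]]. apply Rnot_lt_le. intros Hc. apply Hn. exists x. auto. }
    destruct eps; simpl in *; lra. }
  destruct Hx0 as [x0 [Hx0 Hl]].
  assert (Hx0p : 0 < x0) by lra.
  exists (mkposreal x0 Hx0p). intros x Hx Hxp. apply ball_R1 in Hx. simpl in Hx.
  rewrite Rminus_0_r in Hx. rewrite Rabs_pos_eq in Hx by lra.
  apply ball_R.
  assert (Phi x0 <= Phi x) by (apply Hm; lra).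
  assert (Phi x <= l) by (apply Hub; exists x; split; [lra|auto]).
  apply Rabs_lt_between'. destruct eps; simpl in *; lra.
Qed.

Lemma igen_right (f I : R -> R) (l : R) :
  (forall b, 1 < b -> is_RInt f 1 b (I b)) ->
  filterlim I (Rbar_locally p_infty) (locally l) ->
  is_RInt_gen f (at_point 1) (Rbar_locally p_infty) l.
Proof.
  intros HI Hl P HP.
  specialize (Hl P HP).
  destruct Hl as [M HM].
  apply Filter_prod with (Q := fun a => a = 1) (R := fun b => Rmax 1 M < b).
  - reflexivity.
  - exists (Rmax 1 M). auto.
  - intros x y -> Hy. simpl. exists (I y). split.
    + apply HI. generalize (Rmax_l 1 M); lra.
    + apply HM. generalize (Rmax_r 1 M); lra.
Qed.

Lemma igen_left (f I : R -> R) (l : R) :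
  (forall a, 0 < a < 1 -> is_RInt f a 1 (I a)) ->
  filterlim I (at_right 0) (locally l) ->
  is_RInt_gen f (at_right 0) (at_point 1) l.
Proof.
  intros HI Hl P HP.
  specialize (Hl P HP).
  destruct Hl as [d Hd].
  apply Filter_prod with (Q := fun a => 0 < a < Rmin 1 d) (R := fun b => b = 1).
  - assert (Hp : 0 < Rmin 1 d) by (apply Rmin_pos; [lra| apply cond_pos]).
    exists (mkposreal _ Hp). intros y Hy Hy0. apply ball_R1 in Hy. simpl in Hy.
    rewrite Rminus_0_r, Rabs_pos_eq in Hy by lra. lra.
  - reflexivity.
  - intros x y Hx ->. simpl. exists (I x). split.
    + apply HI. generalize (Rmin_l 1 d); lra.
    + apply Hd. apply ball_R. rewrite Rminus_0_r, Rabs_pos_eq by lra.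
      generalize (Rmin_r 1 d); lra. lra.
Qed.

Lemma Rpower_derive (a t : R) : 0 < t -> is_derive (fun s => Rpower s a) t (a * Rpower t (a - 1)).
Proof. intros Ht. apply is_derive_Reals. apply derivable_pt_lim_power. auto. Qed.

Lemma Rpower_cont (a t : R) : 0 < t -> continuous (fun s => Rpower s a) t.
Proof. intros Ht. eapply dR_cont. apply Rpower_derive; auto. Qed.

Lemma is_RInt_Rpower (a x : R) : -1 < a -> 0 < x -> x <= 1 ->
  is_RInt (fun t => Rpower t a) x 1 ((Rpower 1 (a+1) - Rpower x (a+1))/(a+1)).
Proof.
  intros Ha Hx Hx1.
  replace ((Rpower 1 (a+1) - Rpower x (a+1))/(a+1)) with
    (minus ((fun s => / (a+1) * Rpower s (a+1)) 1) ((fun s => / (a+1) * Rpower s (a+1)) x))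
    by (unfold minus, plus, opp; simpl; field; lra).
  apply (is_RInt_derive (V:=R_CompleteNormedModule) (fun s => / (a+1) * Rpower s (a+1))).
  - intros t Ht. rewrite Rmin_left, Rmax_right in Ht by lra.
    eapply dR_eq. apply dR_scal. apply Rpower_derive. lra.
    replace (a + 1 - 1) with a by ring. change (/ (a + 1) * ((a + 1) * Rpower t a) = Rpower t a). field. lra.
  - intros t Ht. rewrite Rmin_left, Rmax_right in Ht by lra. apply Rpower_cont. lra.
Qed.

Lemma is_RInt_expm2 (M x : R) :
  is_RInt (fun t => M * exp (- t / 2)) 1 x (2 * M * exp (- 1 / 2) - 2 * M * exp (- x / 2)).
Proof.
  replace (2 * M * exp (- 1 / 2) - 2 * M * exp (- x / 2)) with
    ((-2 * M * exp (- x / 2)) - (-2 * M * exp (- 1 / 2))) by ring.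
  change (is_RInt (fun t => M * exp (- t / 2)) 1 x
    (minus ((fun s => -2 * M * exp (- s / 2)) x) ((fun s => -2 * M * exp (- s / 2)) 1))).
  apply (is_RInt_derive (V:=R_CompleteNormedModule) (fun s => -2 * M * exp (- s / 2))).
  - intros t _. apply (dR_ext (fun s => -2 * M * exp ((-1/2) * s + 0))). intros; f_equal; f_equal; field.
    eapply dR_eq. apply dR_scal. apply (dR_comp exp (fun s => (-1/2) * s + 0)). apply dR_exp. apply dR_lin.
    replace (- t / 2) with ((-1/2) * t + 0) by field. field.
  - intros t _. apply cR_mult. apply cR_const. apply (cR_comp exp (fun t => - t / 2)).
    apply (cR_ext (fun t => (-1/2) * t + 0)). intros; field. apply cR_lin.
    apply cR_exp.
Qed.

Lemma igen_exists (a M : R) (f : R -> R) :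
  -1 < a -> 0 <= M ->
  (forall t, 0 < t -> continuous f t) ->
  (forall t, 0 < t -> 0 <= f t) ->
  (forall t, 1 <= t -> f t <= M * exp (- t / 2)) ->
  (forall t, 0 < t <= 1 -> f t <= M * Rpower t a) ->
  exists l, is_RInt_gen f (at_right 0) (Rbar_locally p_infty) l.
Proof.
  intros Ha HM Hc Hp Hb1 Hb0.
  assert (Hex : forall x y, 0 < x -> 0 < y -> ex_RInt f x y).
  { intros x y Hx Hy. apply (ex_RInt_continuous (V:=R_CompleteNormedModule)). intros z Hz. apply Hc.
    generalize (Rmin_glb_lt x y 0 Hx Hy). intros; lra. }
  assert (Hpos : forall x y, 0 < x <= y -> 0 <= RInt f x y).
  { intros x y Hxy. apply RInt_ge_0. lra. apply Hex; lra. intros; apply Hp; lra. }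
  assert (Hch : forall x y z, 0 < x -> 0 < y -> 0 < z -> RInt f x y + RInt f y z = RInt f x z).
  { intros x y z Hx Hy Hz. apply (RInt_Chasles (V:=R_CompleteNormedModule) f x y z); apply Hex; auto. }
  destruct (mono_lim_pinfty (fun b => RInt f 1 b) (2 * M * exp (- 1 / 2))) as [l2 Hl2].
  { intros x y Hxy. rewrite <- (Hch 1 x y) by lra. generalize (Hpos x y ltac:(lra)). lra. }
  { intros x Hx. apply Rle_trans with (2 * M * exp (- 1 / 2) - 2 * M * exp (- x / 2)).
    rewrite <- (is_RInt_unique _ _ _ _ (is_RInt_expm2 M x)).
    apply RInt_le; auto. apply Hex; lra. eexists; apply is_RInt_expm2.
    intros t Ht. apply Hb1; lra.
    generalize (exp_pos (- x / 2)); intros; nra. }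
  destruct (mono_lim_right0 (fun b => RInt f b 1) (M * (Rpower 1 (a+1) / (a+1)))) as [l1 Hl1].
  { intros x y Hxy Hy. rewrite <- (Hch x y 1) by lra. generalize (Hpos x y ltac:(lra)). lra. }
  { intros x Hx. destruct (Req_dec x 1) as [->|Hx1].
    - rewrite RInt_point. apply Rmult_le_pos; auto. apply Rlt_le, Rdiv_lt_0_compat.
      apply exp_pos. lra.
    - apply Rle_trans with (M * ((Rpower 1 (a+1) - Rpower x (a+1))/(a+1))).
      + assert (HI : is_RInt (fun t => M * Rpower t a) x 1
           (M * ((Rpower 1 (a+1) - Rpower x (a+1))/(a+1)))).
        { exact (is_RInt_scal _ _ _ M _ (is_RInt_Rpower a x Ha ltac:(lra) ltac:(lra))). }
        rewrite <- (is_RInt_unique _ _ _ _ HI).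
        apply RInt_le; auto. lra. apply Hex; lra. eexists; apply HI.
        intros t Ht. apply Hb0; lra.
      + apply Rmult_le_compat_l; auto. unfold Rdiv. apply Rmult_le_compat_r.
        apply Rlt_le, Rinv_0_lt_compat; lra.
        generalize (exp_pos ((a+1) * ln x)). unfold Rpower. lra. }
  exists (plus l1 l2).
  apply (is_RInt_gen_Chasles f 1).
  - apply (igen_left f (fun b => RInt f b 1)); auto.
    intros x Hx. apply (RInt_correct (V:=R_CompleteNormedModule)). apply Hex; lra.
  - apply (igen_right f (fun b => RInt f 1 b)); auto.
    intros x Hx. apply (RInt_correct (V:=R_CompleteNormedModule)). apply Hex; lra.
Qed.

Lemma exp_mult_nat (x : R) (m : nat) : exp x ^ m = exp (INR m * x).
Proof.
  induction m. simpl. rewrite Rmult_0_l, exp_0. reflexivity.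
  rewrite S_INR, <- tech_pow_Rmult, IHm. rewrite <- exp_plus. f_equal. ring.
Qed.

Lemma pow_exp_bound (m : nat) : exists C, 0 < C /\ forall t, 0 <= t -> t ^ m <= C * exp (t / 2).
Proof.
  destruct m as [|m].
  - exists 1. split. lra. intros t Ht. simpl. rewrite Rmult_1_l.
    generalize (exp_ineq1_le (t/2)). lra.
  - set (n := INR (S m)). assert (Hn : 0 < n) by (apply lt_0_INR; lia).
    exists ((2 * n) ^ (S m)). split. apply pow_lt. lra.
    intros t Ht.
    replace t with ((2 * n) * (t / (2 * n))) at 1 by (field; lra).
    rewrite Rpow_mult_distr. apply Rmult_le_compat_l. apply pow_le. lra.
    replace (t / 2) with (n * (t / (2 * n))) by (field; lra).
    unfold n. rewrite <- exp_mult_nat. apply pow_incr. split.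
    apply Rmult_le_pos; [lra| apply Rlt_le, Rinv_0_lt_compat]. unfold n in Hn; lra.
    generalize (exp_ineq1_le (t / (2 * INR (S m)))). fold n. lra.
Qed.

Lemma ln_le_id (t : R) : 0 < t -> ln t <= t.
Proof. intros Ht. generalize (exp_ineq1_le (ln t)). rewrite exp_ln by auto. lra. Qed.

Lemma quad_bound (b t : R) : - t ^ 2 / 2 + b * t <= b ^ 2 / 2.
Proof. assert (0 <= (t - b) ^ 2) by apply pow2_ge_0. nra. Qed.

Lemma exp_taylor_bound (x : R) : Rabs (exp x - 1 - x) <= x ^ 2 * exp (Rabs x).
Proof.
  assert (H1 : forall y, Rabs (exp y - 1) <= Rabs y * exp (Rabs y)).
  { intros y. destruct (MVT_cor4 exp exp 0 (Rabs y)) with (b := y) as [c [Hc Hcy]].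
    - intros c _. apply dR_exp.
    - rewrite Rminus_0_r; lra.
    - rewrite exp_0 in Hc. rewrite !Rminus_0_r in Hc. assert (E1 : Rabs (c - 0) = Rabs c) by (f_equal; ring). assert (E2 : Rabs (y - 0) = Rabs y) by (f_equal; ring). rewrite E1, E2 in Hcy. rewrite Hc. rewrite Rabs_mult.
      rewrite (Rabs_pos_eq (exp c)) by (apply Rlt_le, exp_pos). rewrite Rmult_comm.
      apply Rmult_le_compat_l. apply Rabs_pos.
      destruct (Rle_lt_dec c (Rabs y)). destruct (Req_dec c (Rabs y)). rewrite H; lra.
      apply Rlt_le, exp_increasing. lra. generalize (Rle_abs c). lra. }
  destruct (MVT_cor4 (fun y => exp y - 1 - y) (fun y => exp y - 1) 0 (Rabs x)) with (b := x)
    as [c [Hc Hcy]].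
  - intros c _. eapply dR_eq. apply dR_minus. apply dR_minus. apply dR_exp. apply dR_const. apply dR_id.
    ring.
  - rewrite Rminus_0_r; lra.
  - rewrite exp_0 in Hc. assert (Hc' : exp x - 1 - x = (exp c - 1) * x) by (rewrite Rminus_0_r in Hc; lra).
    assert (E1 : Rabs (c - 0) = Rabs c) by (f_equal; ring). assert (E2 : Rabs (x - 0) = Rabs x) by (f_equal; ring).
    rewrite E1, E2 in Hcy. rewrite Hc', Rabs_mult.
    apply Rle_trans with ((Rabs c * exp (Rabs c)) * Rabs x).
    apply Rmult_le_compat_r. apply Rabs_pos. apply H1.
    rewrite <- (pow2_abs x). simpl. rewrite Rmult_1_r.
    replace (Rabs x * Rabs x * exp (Rabs x)) with ((Rabs x * exp (Rabs x)) * Rabs x) by ring.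
    apply Rmult_le_compat_r. apply Rabs_pos.
    apply Rmult_le_compat. apply Rabs_pos. apply Rlt_le, exp_pos. auto.
    destruct (Req_dec (Rabs c) (Rabs x)). rewrite H; lra. apply Rlt_le, exp_increasing. lra.
Qed.

Lemma exp_le (x y : R) : x <= y -> exp x <= exp y.
Proof. intros H. destruct (Req_dec x y) as [->|]. lra. apply Rlt_le, exp_increasing. lra. Qed.

Lemma pow_le_one (t : R) (k : nat) : 0 <= t <= 1 -> t ^ k <= 1.
Proof. intros H. rewrite <- (pow1 k). apply pow_incr. lra. Qed.

Definition fk (a : R) (k : nat) (u t : R) : R := Rpower t a * (t ^ k * exp (- t ^ 2 / 2 - u * t)).

Lemma fk_cont (a : R) (k : nat) (u t : R) : 0 < t -> continuous (fk a k u) t.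
Proof.
  intros Ht. unfold fk. apply cR_mult. apply Rpower_cont; auto.
  apply cR_mult. apply cR_pow. apply cR_id.
  apply (cR_comp exp (fun t => - t ^ 2 / 2 - u * t)).
  - apply cR_minus. apply (cR_ext (fun t => (-1/2) * (t ^ 2))). intros; field.
    apply cR_mult. apply cR_const. apply cR_pow. apply cR_id.
    apply cR_mult. apply cR_const. apply cR_id.
  - apply cR_exp.
Qed.

Lemma Rpower_pos (t a : R) : 0 < Rpower t a.
Proof. unfold Rpower. apply exp_pos. Qed.

Lemma fk_pos (a : R) (k : nat) (u t : R) : 0 < t -> 0 < fk a k u t.
Proof.
  intros Ht. unfold fk. apply Rmult_lt_0_compat. apply Rpower_pos.
  apply Rmult_lt_0_compat. apply pow_lt; auto. apply exp_pos.
Qed.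

Lemma fk_ex (a : R) (k : nat) (u : R) : -1 < a ->
  exists l, is_RInt_gen (fk a k u) (at_right 0) (Rbar_locally p_infty) l.
Proof.
  intros Ha.
  destruct (pow_exp_bound k) as [C [HC HCb]].
  set (b := Rabs a + 1 - u).
  apply (igen_exists a (exp (Rabs u) + C * exp (b ^ 2 / 2))); auto.
  - generalize (exp_pos (Rabs u)) (exp_pos (b ^ 2 / 2)). nra.
  - intros; apply fk_cont; auto.
  - intros; apply Rlt_le, fk_pos; auto.
  - intros t Ht. unfold fk.
    assert (H1 : Rpower t a <= exp (Rabs a * t)).
    { unfold Rpower. apply exp_le.
      assert (0 <= ln t) by (rewrite <- ln_1; apply ln_le; lra).
      assert (ln t <= t) by (apply ln_le_id; lra).
      apply Rle_trans with (Rabs a * ln t). apply Rmult_le_compat_r; auto. apply Rle_abs.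
      apply Rmult_le_compat_l; auto. apply Rabs_pos. }
    assert (H2 := HCb t ltac:(lra)).
    apply Rle_trans with (exp (Rabs a * t) * (C * exp (t / 2) * exp (- t ^ 2 / 2 - u * t))).
    { apply Rmult_le_compat; auto. apply Rlt_le, Rpower_pos.
      apply Rmult_le_pos. apply pow_le; lra. apply Rlt_le, exp_pos.
      apply Rmult_le_compat_r; auto. apply Rlt_le, exp_pos. }
    replace (exp (Rabs a * t) * (C * exp (t / 2) * exp (- t ^ 2 / 2 - u * t))) with
      (C * exp (- t ^ 2 / 2 + b * t) * exp (- t / 2)).
    2: { unfold b. rewrite Rmult_assoc, <- exp_plus.
         replace (exp (Rabs a * t) * (C * exp (t / 2) * exp (- t ^ 2 / 2 - u * t))) with
           (C * (exp (Rabs a * t) * exp (t / 2) * exp (- t ^ 2 / 2 - u * t))) by ring.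
         rewrite <- !exp_plus. f_equal. f_equal. field. }
    apply Rmult_le_compat_r. apply Rlt_le, exp_pos.
    apply Rle_trans with (C * exp (b ^ 2 / 2)).
    apply Rmult_le_compat_l. lra. apply exp_le. apply quad_bound.
    generalize (exp_pos (Rabs u)). lra.
  - intros t Ht. unfold fk. rewrite (Rmult_comm (exp (Rabs u) + C * exp (b ^ 2 / 2))).
    apply Rmult_le_compat_l. apply Rlt_le, Rpower_pos.
    apply Rle_trans with (1 * exp (Rabs u)).
    apply Rmult_le_compat. apply pow_le; lra. apply Rlt_le, exp_pos.
    apply pow_le_one; lra. apply exp_le.
    assert (- u * t <= Rabs u).
    { apply Rle_trans with (Rabs u * t). rewrite <- Rabs_Ropp. apply Rmult_le_compat_r. lra. apply Rle_abs.
      rewrite <- (Rmult_1_r (Rabs u)) at 2. apply Rmult_le_compat_l. apply Rabs_pos. lra. }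
    assert (0 <= t ^ 2) by apply pow2_ge_0. lra.
    generalize (exp_pos (b ^ 2 / 2)) (exp_pos (Rabs u)). nra.
Qed.

Definition Jk (a : R) (k : nat) (u : R) : R := RInt_gen (fk a k u) (at_right 0) (Rbar_locally p_infty).

Lemma Jk_correct (a : R) (k : nat) (u : R) : -1 < a ->
  is_RInt_gen (fk a k u) (at_right 0) (Rbar_locally p_infty) (Jk a k u).
Proof.
  intros Ha. destruct (fk_ex a k u Ha) as [l Hl].
  unfold Jk. rewrite (is_RInt_gen_unique _ l Hl). exact Hl.
Qed.

Lemma igen_pos (f : R -> R) (l c d : R) :
  is_RInt_gen f (at_right 0) (Rbar_locally p_infty) l ->
  (forall t, 0 < t -> continuous f t) -> (forall t, 0 < t -> 0 <= f t) ->
  0 < c < d -> (forall t, c < t < d -> 0 < f t) -> 0 < l.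
Proof.
  intros Hl Hc Hp Hcd Hpos.
  assert (Hex : forall x y, 0 < x -> 0 < y -> ex_RInt f x y).
  { intros x y Hx Hy. apply (ex_RInt_continuous (V:=R_CompleteNormedModule)). intros z Hz. apply Hc.
    generalize (Rmin_glb_lt x y 0 Hx Hy). intros; lra. }
  assert (Hm : 0 < RInt f c d).
  { apply RInt_gt_0; try lra. auto. intros; apply Hc; lra. }
  set (m := RInt f c d) in *.
  assert (He : 0 < m / 2) by lra.
  destruct (Hl _ (locally_ball l (mkposreal _ He))) as [Q R0 HQ HR HQR].
  destruct HQ as [eps HQ]. destruct HR as [M HR].
  set (a0 := Rmin (eps / 2) (c / 2)). set (b0 := Rmax (M + 1) (d + 1)).
  assert (Ha0 : 0 < a0) by (apply Rmin_pos; generalize (cond_pos eps); lra).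
  assert (Ha0c : a0 < c) by (generalize (Rmin_r (eps/2) (c/2)); unfold a0; lra).
  assert (Hb0 : d < b0) by (generalize (Rmax_r (M+1) (d+1)); unfold b0; lra).
  destruct (HQR a0 b0) as [y [Hy Hyl]].
  - apply HQ. apply ball_R. rewrite Rminus_0_r, Rabs_pos_eq by lra.
    generalize (Rmin_l (eps/2) (c/2)) (cond_pos eps). unfold a0. lra. auto.
  - apply HR. generalize (Rmax_l (M+1) (d+1)). unfold b0. lra.
  - simpl in Hy. apply (is_RInt_unique (V:=R_CompleteNormedModule)) in Hy. apply ball_R1 in Hyl. simpl in Hyl.
    assert (Hy2 : m <= y).
    { rewrite <- Hy.
      rewrite <- (RInt_Chasles (V:=R_CompleteNormedModule) f a0 c b0) by (apply Hex; lra).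
      rewrite <- (RInt_Chasles (V:=R_CompleteNormedModule) f c d b0) by (apply Hex; lra).
      assert (0 <= RInt f a0 c) by (apply RInt_ge_0; [lra| apply Hex; lra| intros; apply Hp; lra]).
      assert (0 <= RInt f d b0) by (apply RInt_ge_0; [lra| apply Hex; lra| intros; apply Hp; lra]).
      change (m <= RInt f a0 c + (m + RInt f d b0)). lra. }
    apply Rabs_lt_between' in Hyl. lra.
Qed.

Lemma Jk_pos (a : R) (k : nat) (u : R) : -1 < a -> 0 < Jk a k u.
Proof.
  intros Ha. apply (igen_pos (fk a k u) _ 1 2). apply Jk_correct; auto.
  intros; apply fk_cont; auto. intros; apply Rlt_le, fk_pos; auto. lra.
  intros; apply fk_pos; lra.
Qed.

Lemma igen_ext_all (f g : R -> R) (l : R) :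
  (forall t, f t = g t) ->
  is_RInt_gen f (at_right 0) (Rbar_locally p_infty) l ->
  is_RInt_gen g (at_right 0) (Rbar_locally p_infty) l.
Proof.
  intros H. apply is_RInt_gen_ext.
  apply Filter_prod with (Q := fun _ => True) (R := fun _ => True).
  apply filter_true. apply filter_true. intros; auto.
Qed.

Lemma igen_le (f g : R -> R) (lf lg : R) :
  (forall t, 0 < t -> Rabs (f t) <= g t) ->
  is_RInt_gen f (at_right 0) (Rbar_locally p_infty) lf ->
  is_RInt_gen g (at_right 0) (Rbar_locally p_infty) lg ->
  Rabs lf <= lg.
Proof.
  intros H Hf Hg.
  apply (RInt_gen_norm (V:=R_CompleteNormedModule) (Fa := at_right 0) (Fb := Rbar_locally p_infty) f g lf lg); auto.
  - apply Filter_prod with (Q := fun a => a < 1) (R := fun b => 1 < b).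
    unfold at_right, within, locally. exists (mkposreal 1 Rlt_0_1). intros y Hy _. apply ball_R1 in Hy. simpl in Hy.
    rewrite Rminus_0_r in Hy. apply Rabs_lt_between in Hy. lra.
    exists 1. auto. intros x y Hx Hy. simpl. lra.
  - apply Filter_prod with (Q := fun a => 0 < a) (R := fun b => True).
    unfold at_right, within, locally. exists (mkposreal 1 Rlt_0_1). intros y _ Hy. auto.
    apply filter_true. intros x y Hx _ z Hz. simpl in *. apply H. lra.
Qed.

Lemma Jk_diff_bound (a : R) (k : nat) (u h : R) : -1 < a -> Rabs h <= 1 ->
  Rabs (Jk a k (u + h) - Jk a k u + h * Jk a (S k) u) <= h ^ 2 * Jk a (S (S k)) (u - 1).
Proof.
  intros Ha Hh.
  assert (HG : is_RInt_gen (fun t => fk a k (u+h) t - fk a k u t + h * fk a (S k) u t)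
     (at_right 0) (Rbar_locally p_infty) (Jk a k (u + h) - Jk a k u + h * Jk a (S k) u)).
  { exact (is_RInt_gen_plus _ _ _ _ (is_RInt_gen_minus _ _ _ _ (Jk_correct a k (u+h) Ha) (Jk_correct a k u Ha))
       (is_RInt_gen_scal _ h _ (Jk_correct a (S k) u Ha))). }
  assert (HB : is_RInt_gen (fun t => h ^ 2 * fk a (S (S k)) (u - 1) t)
     (at_right 0) (Rbar_locally p_infty) (h ^ 2 * Jk a (S (S k)) (u - 1))).
  { exact (is_RInt_gen_scal _ (h ^ 2) _ (Jk_correct a (S (S k)) (u - 1) Ha)). }
  refine (igen_le _ _ _ _ _ HG HB).
  intros t Ht. unfold fk.
  set (P := Rpower t a * t ^ k * exp (- t ^ 2 / 2 - u * t)).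
  assert (HP : 0 <= P).
  { unfold P. apply Rmult_le_pos. apply Rmult_le_pos. apply Rlt_le, Rpower_pos. apply pow_le; lra.
    apply Rlt_le, exp_pos. }
  assert (E1 : Rpower t a * (t ^ k * exp (- t ^ 2 / 2 - (u + h) * t)) - Rpower t a * (t ^ k * exp (- t ^ 2 / 2 - u * t))
       + h * (Rpower t a * (t ^ S k * exp (- t ^ 2 / 2 - u * t)))
       = P * (exp (- h * t) - 1 - (- h * t))).
  { unfold P. replace (- t ^ 2 / 2 - (u + h) * t) with ((- t ^ 2 / 2 - u * t) + (- h * t)) by ring.
    rewrite exp_plus. simpl. ring. }
  assert (E2 : h ^ 2 * (Rpower t a * (t ^ S (S k) * exp (- t ^ 2 / 2 - (u - 1) * t)))
       = P * ((- h * t) ^ 2 * exp t)).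
  { unfold P. replace (- t ^ 2 / 2 - (u - 1) * t) with ((- t ^ 2 / 2 - u * t) + t) by ring.
    rewrite exp_plus. simpl. ring. }
  rewrite E1, E2, Rabs_mult, Rabs_pos_eq by auto.
  apply Rmult_le_compat_l; auto.
  apply Rle_trans with ((- h * t) ^ 2 * exp (Rabs (- h * t))). apply exp_taylor_bound.
  apply Rmult_le_compat_l. apply pow2_ge_0. apply exp_le.
  rewrite Rabs_mult, (Rabs_pos_eq t) by lra. rewrite Rabs_Ropp.
  rewrite <- (Rmult_1_l t) at 2. apply Rmult_le_compat_r; lra.
Qed.

Lemma Jk_deriv (a : R) (k : nat) (u : R) : -1 < a -> is_derive (Jk a k) u (- Jk a (S k) u).
Proof.
  intros Ha. apply is_derive_Reals. intros eps Heps.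
  set (C := Jk a (S (S k)) (u - 1)).
  assert (HC : 0 < C) by (apply Jk_pos; auto).
  assert (Hd : 0 < Rmin 1 (eps / (C + 1))).
  { apply Rmin_pos. lra. apply Rdiv_lt_0_compat; lra. }
  exists (mkposreal _ Hd). intros h Hh0 Hh. simpl in Hh.
  assert (Hh1 : Rabs h <= 1) by (generalize (Rmin_l 1 (eps / (C + 1))); lra).
  assert (Hh2 : Rabs h < eps / (C + 1)) by (generalize (Rmin_r 1 (eps / (C + 1))); lra).
  generalize (Jk_diff_bound a k u h Ha Hh1). fold C. intros Hb.
  replace ((Jk a k (u + h) - Jk a k u) / h - - Jk a (S k) u) with
    ((Jk a k (u + h) - Jk a k u + h * Jk a (S k) u) / h) by (field; auto).
  unfold Rdiv. rewrite Rabs_mult, Rabs_inv.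
  assert (Hah : 0 < Rabs h) by (apply Rabs_pos_lt; auto).
  apply Rle_lt_trans with (h ^ 2 * C * / Rabs h).
  apply Rmult_le_compat_r. apply Rlt_le, Rinv_0_lt_compat; auto. auto.
  rewrite <- (pow2_abs h). replace (Rabs h ^ 2 * C * / Rabs h) with (Rabs h * C) by (field; lra).
  apply Rle_lt_trans with (Rabs h * (C + 1)). apply Rmult_le_compat_l; lra.
  apply Rmult_lt_compat_r with (r := C + 1) in Hh2; [|lra].
  replace (eps / (C + 1) * (C + 1)) with eps in Hh2 by (field; lra). lra.
Qed.

Lemma Jk_CS (a u : R) : -1 < a -> Jk a 1 u ^ 2 < Jk a 0 u * Jk a 2 u.
Proof.
  intros Ha.
  set (J0 := Jk a 0 u). set (J1 := Jk a 1 u). set (J2 := Jk a 2 u).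
  assert (H2 : 0 < J2) by (apply Jk_pos; auto).
  set (s := J1 / J2).
  assert (HG : is_RInt_gen (fun t => fk a 0 u t - (2 * s) * fk a 1 u t + (s ^ 2) * fk a 2 u t)
     (at_right 0) (Rbar_locally p_infty) (J0 - (2 * s) * J1 + (s ^ 2) * J2)).
  { exact (is_RInt_gen_plus _ _ _ _ (is_RInt_gen_minus _ _ _ _ (Jk_correct a 0 u Ha)
            (is_RInt_gen_scal _ (2 * s) _ (Jk_correct a 1 u Ha)))
       (is_RInt_gen_scal _ (s ^ 2) _ (Jk_correct a 2 u Ha))). }
  assert (Ept : forall t, fk a 0 u t - (2 * s) * fk a 1 u t + (s ^ 2) * fk a 2 u t
        = Rpower t a * exp (- t ^ 2 / 2 - u * t) * (1 - s * t) ^ 2).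
  { intros t. unfold fk. simpl. ring. }
  assert (Hpos : 0 < J0 - (2 * s) * J1 + (s ^ 2) * J2).
  { destruct (Rle_lt_dec s 0) as [Hs|Hs].
    - apply (igen_pos _ _ 1 2 HG).
      + intros t Ht. apply cR_plus. apply cR_minus. apply fk_cont; auto.
        apply cR_mult. apply cR_const. apply fk_cont; auto.
        apply cR_mult. apply cR_const. apply fk_cont; auto.
      + intros t Ht. rewrite Ept. apply Rmult_le_pos. apply Rmult_le_pos.
        apply Rlt_le, Rpower_pos. apply Rlt_le, exp_pos. apply pow2_ge_0.
      + lra.
      + intros t Ht. rewrite Ept. apply Rmult_lt_0_compat. apply Rmult_lt_0_compat.
        apply Rpower_pos. apply exp_pos. apply pow_lt. nra.
    - apply (igen_pos _ _ (/ s + 1) (/ s + 2) HG).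
      + intros t Ht. apply cR_plus. apply cR_minus. apply fk_cont; auto.
        apply cR_mult. apply cR_const. apply fk_cont; auto.
        apply cR_mult. apply cR_const. apply fk_cont; auto.
      + intros t Ht. rewrite Ept. apply Rmult_le_pos. apply Rmult_le_pos.
        apply Rlt_le, Rpower_pos. apply Rlt_le, exp_pos. apply pow2_ge_0.
      + assert (0 < / s) by (apply Rinv_0_lt_compat; auto). lra.
      + intros t Ht. rewrite Ept. apply Rmult_lt_0_compat. apply Rmult_lt_0_compat.
        apply Rpower_pos. apply exp_pos.
        assert (Hst : 1 < s * t).
        { destruct Ht as [Ht _]. apply Rmult_lt_compat_l with (r := s) in Ht; auto.
          rewrite Rmult_plus_distr_l, Rinv_r in Ht by lra. lra. }
        replace ((1 - s * t) ^ 2) with ((s * t - 1) ^ 2) by ring. apply pow_lt. lra. }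
  unfold s in Hpos.
  replace (J0 - 2 * (J1 / J2) * J1 + (J1 / J2) ^ 2 * J2) with ((J0 * J2 - J1 ^ 2) / J2) in Hpos
    by (field; lra).
  assert (0 < J0 * J2 - J1 ^ 2).
  { apply Rmult_lt_compat_r with (r := J2) in Hpos; auto.
    unfold Rdiv in Hpos. rewrite Rmult_0_l, Rmult_assoc, Rinv_l, Rmult_1_r in Hpos by lra. auto. }
  lra.
Qed.
Definition pa (p : Params) : R := - (- p_rho p / p_kappa p) - 1.
Definition plam (p : Params) : R := sqrt (2 * p_kappa p) / p_sigma p.
Definition pGam (p : Params) : R := Gamma_fn (- (- p_rho p / p_kappa p)).
Definition pell (p : Params) (x : R) : R := - (x - p_mu p) / p_sigma p * sqrt (2 * p_kappa p).

Lemma pa_gt (p : Params) : 0 < p_kappa p -> 0 < p_rho p -> -1 < pa p.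
Proof. intros Hk Hr. unfold pa. assert (0 < p_rho p / p_kappa p) by (apply Rdiv_lt_0_compat; auto). lra. Qed.

Lemma plam_pos (p : Params) : 0 < p_kappa p -> 0 < p_sigma p -> 0 < plam p.
Proof. intros Hk Hs. unfold plam. apply Rdiv_lt_0_compat; auto. apply sqrt_lt_R0. lra. Qed.

Lemma psi_formula (p : Params) (x : R) : 0 < p_kappa p -> 0 < p_sigma p -> 0 < p_rho p ->
  psi p x = Jk (pa p) 0 (pell p x) / pGam p.
Proof.
  intros Hk Hs Hr. unfold psi, Dpc.
  assert (HJ : RInt_gen (fun t => Rpower t (- (- p_rho p / p_kappa p) - 1) *
                 exp (- t ^ 2 / 2 - - (x - p_mu p) / p_sigma p * sqrt (2 * p_kappa p) * t))
               (at_right 0) (Rbar_locally p_infty) = Jk (pa p) 0 (pell p x)).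
  { apply is_RInt_gen_unique. apply (igen_ext_all (fk (pa p) 0 (pell p x))).
    intros t. unfold fk, pell, pa. simpl. ring. apply Jk_correct. apply pa_gt; auto. }
  rewrite HJ. unfold pGam.
  assert (He : exp (p_kappa p * (x - p_mu p) ^ 2 / (2 * p_sigma p ^ 2)) *
               exp (- (- (x - p_mu p) / p_sigma p * sqrt (2 * p_kappa p)) ^ 2 / 4) = 1).
  { rewrite <- exp_plus. rewrite <- exp_0. f_equal.
    replace ((- (x - p_mu p) / p_sigma p * sqrt (2 * p_kappa p)) ^ 2) with
      ((x - p_mu p) ^ 2 / p_sigma p ^ 2 * (sqrt (2 * p_kappa p)) ^ 2) by (field; lra).
    rewrite pow2_sqrt by lra. field. lra. }
  rewrite <- (Rmult_1_l (Jk (pa p) 0 (pell p x) / _)). rewrite <- He at 1. unfold pell, Rdiv. ring.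
Qed.

Lemma pell_deriv (p : Params) (x : R) : is_derive (pell p) x (- plam p).
Proof.
  unfold pell, plam. apply (dR_ext (fun s => (- sqrt (2 * p_kappa p) / p_sigma p) * s + (p_mu p / p_sigma p * sqrt (2 * p_kappa p)))).
  intros; unfold Rdiv; ring.
  eapply dR_eq. apply dR_lin. unfold Rdiv; ring.
Qed.

Lemma dpsi_formula (p : Params) (k : nat) (x : R) : 0 < p_kappa p -> 0 < p_sigma p -> 0 < p_rho p ->
  dpsi p k x = plam p ^ k * Jk (pa p) k (pell p x) / pGam p.
Proof.
  intros Hk Hs Hr. revert x. induction k; intros x.
  - unfold dpsi. simpl. rewrite psi_formula by auto. unfold Rdiv; ring.
  - unfold dpsi. simpl. unfold dpsi in IHk.
    rewrite (Derive_ext _ _ x IHk).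
    apply is_derive_unique.
    apply (dR_ext (fun y => (plam p ^ k / pGam p) * Jk (pa p) k (pell p y))).
    intros; Req; unfold Rdiv; ring.
    eapply dR_eq. apply dR_scal. apply (dR_comp (Jk (pa p) k) (pell p)).
    apply Jk_deriv. apply pa_gt; auto. apply pell_deriv.
    Req. simpl. unfold Rdiv. ring.
Qed.

Lemma dpsi_deriv (p : Params) (k : nat) (x : R) : 0 < p_kappa p -> 0 < p_sigma p -> 0 < p_rho p ->
  is_derive (dpsi p k) x (dpsi p (S k) x).
Proof.
  intros Hk Hs Hr.
  apply (dR_ext (fun y => (plam p ^ k / pGam p) * Jk (pa p) k (pell p y))).
  intros; rewrite dpsi_formula by auto; Req; unfold Rdiv; ring.
  eapply dR_eq. apply dR_scal. apply (dR_comp (Jk (pa p) k) (pell p)).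
  apply Jk_deriv. apply pa_gt; auto. apply pell_deriv.
  rewrite dpsi_formula by auto. simpl. unfold Rdiv. ring.
Qed.

Lemma dpsi_cont (p : Params) (k : nat) (x : R) : 0 < p_kappa p -> 0 < p_sigma p -> 0 < p_rho p ->
  continuous (dpsi p k) x.
Proof. intros. eapply dR_cont. apply dpsi_deriv; auto. Qed.

Lemma Q0_pos (p : Params) (z : R) : 0 < p_kappa p -> 0 < p_sigma p -> 0 < p_rho p -> pGam p <> 0 ->
  0 < Qk p 0 z.
Proof.
  intros Hk Hs Hr HG. unfold Qk. simpl.
  rewrite !dpsi_formula by auto.
  generalize (Jk_CS (pa p) (pell p z) (pa_gt p Hk Hr)). intros H.
  generalize (plam_pos p Hk Hs). intros Hl.
  apply Rlt_le_trans with
    ((plam p / pGam p) ^ 2 * (Jk (pa p) 0 (pell p z) * Jk (pa p) 2 (pell p z) - Jk (pa p) 1 (pell p z) ^ 2)).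
  2: right; field; auto.
  assert (Hn : plam p / pGam p <> 0).
  { unfold Rdiv. apply Rmult_integral_contrapositive_currified. lra. apply Rinv_neq_0_compat; auto. }
  assert (0 < (plam p / pGam p) ^ 2) by (rewrite <- Rsqr_pow2; apply Rsqr_pos_lt; auto).
  apply Rmult_lt_0_compat; lra.
Qed.

Lemma dw_elim (f : R -> R) (a b y l : R) : deriv_within f a b y l ->
  forall eps, 0 < eps -> exists d, 0 < d /\ forall h, h <> 0 -> a <= y + h <= b -> Rabs h < d ->
    Rabs ((f (y + h) - f y) / h - l) < eps.
Proof.
  intros H eps Heps.
  destruct (H _ (locally_ball l (mkposreal eps Heps))) as [d Hd].
  exists d. split. apply cond_pos. intros h Hh Hab Hd'.
  apply ball_R1. apply Hd. apply ball_R. rewrite Rminus_0_r. auto. split; auto.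
Qed.

Lemma dw_intro (f : R -> R) (a b y l : R) :
  (forall eps, 0 < eps -> exists d, 0 < d /\ forall h, h <> 0 -> a <= y + h <= b -> Rabs h < d ->
    Rabs ((f (y + h) - f y) / h - l) < eps) -> deriv_within f a b y l.
Proof.
  intros H. unfold deriv_within. apply filterlim_locally. intros eps.
  destruct (H eps (cond_pos eps)) as [d [Hd Hh]].
  exists (mkposreal d Hd). intros h Hb [Hh0 Hab]. apply ball_R1 in Hb. simpl in Hb.
  rewrite Rminus_0_r in Hb. apply ball_R. apply Hh; auto.
Qed.

Lemma dw_cont (f : R -> R) (a b y l : R) : deriv_within f a b y l ->
  forall eps, 0 < eps -> exists d, 0 < d /\ forall y', a <= y' <= b -> Rabs (y' - y) < d ->
    Rabs (f y' - f y) < eps.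
Proof.
  intros H eps Heps. destruct (dw_elim f a b y l H 1 Rlt_0_1) as [d [Hd Hh]].
  assert (Hl : 0 < Rabs l + 1) by (generalize (Rabs_pos l); lra).
  exists (Rmin d (eps / (Rabs l + 1))). split. apply Rmin_pos; auto. apply Rdiv_lt_0_compat; auto.
  intros y' Hy' Hd'.
  destruct (Req_dec y' y) as [->|Hne]. rewrite Rminus_diag, Rabs_R0. auto.
  set (h := y' - y). assert (Hh0 : h <> 0) by (unfold h; lra).
  assert (Hq := Hh h Hh0 ltac:(unfold h; replace (y + (y' - y)) with y' by ring; auto)
              ltac:(generalize (Rmin_l d (eps / (Rabs l + 1))); unfold h; lra)).
  replace (y + h) with y' in Hq by (unfold h; ring).
  assert (Hq2 : Rabs ((f y' - f y) / h) < Rabs l + 1).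
  { replace ((f y' - f y) / h) with (((f y' - f y) / h - l) + l) by ring.
    generalize (Rabs_triang ((f y' - f y) / h - l) l). lra. }
  replace (f y' - f y) with (((f y' - f y) / h) * h) by (field; auto).
  rewrite Rabs_mult.
  assert (Hh2 : Rabs h < eps / (Rabs l + 1)) by (generalize (Rmin_r d (eps / (Rabs l + 1))); unfold h; lra).
  apply Rle_lt_trans with ((Rabs l + 1) * Rabs h).
  apply Rmult_le_compat_r. apply Rabs_pos. lra.
  apply Rmult_lt_compat_l with (r := Rabs l + 1) in Hh2; auto.
  replace ((Rabs l + 1) * (eps / (Rabs l + 1))) with eps in Hh2 by (field; lra). auto.
Qed.

Definition C2 (f : R -> R -> R) (x y : R) : Prop :=
  continuous (fun q : R * R => f (fst q) (snd q)) (x, y).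

Lemma C2_elim (f : R -> R -> R) (x y : R) : C2 f x y ->
  forall eps, 0 < eps -> exists d, 0 < d /\ forall x' y', Rabs (x' - x) < d -> Rabs (y' - y) < d ->
    Rabs (f x' y' - f x y) < eps.
Proof.
  intros H eps Heps.
  destruct (H _ (locally_ball (f x y) (mkposreal eps Heps))) as [d Hd].
  exists d. split. apply cond_pos. intros x' y' H1 H2.
  apply ball_R1. apply (Hd (x', y')). split; apply ball_R; auto.
Qed.

Lemma C2_intro (f : R -> R -> R) (x y : R) :
  (forall eps, 0 < eps -> exists d, 0 < d /\ forall x' y', Rabs (x' - x) < d -> Rabs (y' - y) < d ->
    Rabs (f x' y' - f x y) < eps) -> C2 f x y.
Proof.
  intros H. unfold C2. apply filterlim_locally. intros eps.
  destruct (H eps (cond_pos eps)) as [d [Hd Hh]].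
  exists (mkposreal d Hd). intros [x' y'] [H1 H2]. apply ball_R. apply Hh.
  apply ball_R1 in H1; auto. apply ball_R1 in H2; auto.
Qed.

Lemma C2_ofx (g : R -> R) (x y : R) : continuous g x -> C2 (fun x y => g x) x y.
Proof.
  intros H. apply C2_intro. intros eps Heps.
  destruct (H _ (locally_ball (g x) (mkposreal eps Heps))) as [d Hd].
  exists d. split. apply cond_pos. intros x' y' H1 _. apply ball_R1. apply Hd. apply ball_R; auto.
Qed.

Lemma C2_ofy (g : R -> R) (x y : R) : continuous g y -> C2 (fun x y => g y) x y.
Proof.
  intros H. apply C2_intro. intros eps Heps.
  destruct (H _ (locally_ball (g y) (mkposreal eps Heps))) as [d Hd].
  exists d. split. apply cond_pos. intros x' y' _ H1. apply ball_R1. apply Hd. apply ball_R; auto.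
Qed.

Lemma C2_fst (x y : R) : C2 (fun x y => x) x y.
Proof. apply (C2_ofx (fun x => x)). apply cR_id. Qed.
Lemma C2_snd (x y : R) : C2 (fun x y => y) x y.
Proof. apply (C2_ofy (fun y => y)). apply cR_id. Qed.
Lemma C2_const (k x y : R) : C2 (fun x y => k) x y.
Proof. apply (C2_ofx (fun x => k)). apply cR_const. Qed.

Lemma C2_plus (f g : R -> R -> R) x y : C2 f x y -> C2 g x y -> C2 (fun x y => f x y + g x y) x y.
Proof.
  intros H1 H2. unfold C2 in *.
  apply (@continuous_plus (prod_UniformSpace R_UniformSpace R_UniformSpace) R_AbsRing R_NormedModule
     (fun q : R * R => f (fst q) (snd q)) (fun q : R * R => g (fst q) (snd q)) (x, y) H1 H2).
Qed.
Lemma C2_mult (f g : R -> R -> R) x y : C2 f x y -> C2 g x y -> C2 (fun x y => f x y * g x y) x y.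
Proof.
  intros H1 H2. unfold C2 in *.
  apply (@continuous_mult (prod_UniformSpace R_UniformSpace R_UniformSpace) R_AbsRing
     (fun q : R * R => f (fst q) (snd q)) (fun q : R * R => g (fst q) (snd q)) (x, y) H1 H2).
Qed.
Lemma C2_comp1 (g : R -> R) (f : R -> R -> R) x y : C2 f x y -> continuous g (f x y) ->
  C2 (fun x y => g (f x y)) x y.
Proof.
  intros H1 H2. unfold C2 in *.
  apply (@continuous_comp (prod_UniformSpace R_UniformSpace R_UniformSpace) R_UniformSpace R_UniformSpace
     (fun q : R * R => f (fst q) (snd q)) g (x, y) H1 H2).
Qed.
Lemma C2_opp (f : R -> R -> R) x y : C2 f x y -> C2 (fun x y => - f x y) x y.
Proof. intros H. apply (C2_comp1 Ropp f). auto. apply (cR_opp (fun t => t)). apply cR_id. Qed.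
Lemma C2_minus (f g : R -> R -> R) x y : C2 f x y -> C2 g x y -> C2 (fun x y => f x y - g x y) x y.
Proof. intros H1 H2. apply (C2_plus f (fun x y => - g x y)); auto. apply C2_opp; auto. Qed.
Lemma C2_comp2 (g u v : R -> R -> R) x y : C2 u x y -> C2 v x y -> C2 g (u x y) (v x y) ->
  C2 (fun x y => g (u x y) (v x y)) x y.
Proof.
  intros H1 H2 H3. unfold C2 in *.
  apply (@continuous_comp_2 (prod_UniformSpace R_UniformSpace R_UniformSpace) R_UniformSpace R_UniformSpace
     R_UniformSpace (fun q : R * R => u (fst q) (snd q)) (fun q : R * R => v (fst q) (snd q)) g (x, y) H1 H2 H3).
Qed.
Lemma C2_ext (f g : R -> R -> R) x y : (forall x y, f x y = g x y) -> C2 f x y -> C2 g x y.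
Proof.
  intros He H. apply C2_intro. intros eps Heps. destruct (C2_elim f x y H eps Heps) as [d [Hd Hh]].
  exists d. split; auto. intros. rewrite <- !He. auto.
Qed.

Lemma Rmax_formula (a b : R) : Rmax a b = (a + b + Rabs (a - b)) / 2.
Proof.
  unfold Rmax. destruct (Rle_dec a b).
  rewrite Rabs_left1 by lra. field. rewrite Rabs_pos_eq by lra. field.
Qed.

Lemma C2_Rmax (x y : R) : C2 Rmax x y.
Proof.
  apply (C2_ext (fun x y => (x + y + Rabs (x - y)) * / 2)).
  intros; rewrite Rmax_formula; reflexivity.
  apply C2_mult. apply C2_plus. apply C2_plus. apply C2_fst. apply C2_snd.
  apply (C2_comp1 Rabs (fun x y => x - y)). apply C2_minus. apply C2_fst. apply C2_snd.
  apply continuous_Rabs. apply C2_const.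
Qed.

Lemma cont_strip_of (f g : R -> R -> R) (yb : R) :
  (forall x y, 0 <= y <= yb -> C2 g x y) -> (forall x y, 0 <= y <= yb -> f x y = g x y) ->
  cont_strip f yb.
Proof.
  intros Hc He x y Hy eps Heps. destruct (C2_elim g x y (Hc x y Hy) eps Heps) as [d [Hd Hh]].
  exists d. split; auto. intros x' y' Hy' H1 H2. rewrite !He by auto. auto.
Qed.

Lemma C2_to1 (g : R -> R -> R) (u v : R -> R) (y : R) :
  continuous u y -> continuous v y -> C2 g (u y) (v y) -> continuous (fun y => g (u y) (v y)) y.
Proof.
  intros H1 H2 H3. unfold C2 in H3.
  apply (@continuous_comp_2 R_UniformSpace R_UniformSpace R_UniformSpace R_UniformSpace u v g y H1 H2 H3).
Qed.
Lemma smooth_alg (rho kappa beta c r p0 p1 p2 p3 g : R) :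
  rho <> 0 -> rho + kappa <> 0 -> beta <> 0 -> p0 * p2 - p1 ^ 2 <> 0 -> p0 <> 0 ->
  (rho + kappa) * (c - r) * (p1 * p3 - p2 ^ 2) + (p0 * p3 - p1 * p2) <> 0 ->
  g = beta * ((p0 * p2 - p1 ^ 2) * ((rho + 2 * kappa) / rho * p1 + (rho + kappa) * (c - r) * p2 + p1))
      / (p0 * ((rho + kappa) * (c - r) * (p1 * p3 - p2 ^ 2) + (p0 * p3 - p1 * p2))) ->
  let Pn := p1 * (c - r) + / (rho + kappa) * p0 in
  let Den := - beta * (p0 * p2 - p1 ^ 2) in
  let dRt := (rho * g - beta * (rho + 2 * kappa)) / (rho * (rho + kappa)) in
  let dPn := p2 * g * (c - r) + p1 * (- dRt) + / (rho + kappa) * (p1 * g) in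
  let dDen := - beta * ((p0 * p3 - p1 * p2) * g) in
  let Ad := (dPn * Den - Pn * dDen) / Den ^ 2 in
  let Ae := Pn / Den in
  Ad * p0 + Ae * beta * p1 + r - c = 0 /\ Ad * p1 + Ae * beta * p2 + / (rho + kappa) = 0.
Proof.
  intros H1 H2 H3 H4 H5 H6 Hg. intros. subst Pn Den dRt dPn dDen Ad Ae. rewrite Hg.
  split; field; repeat split; auto.
Qed.

Section Main.
Variable p : Params.
Local Notation mu := (p_mu p). Local Notation ka := (p_kappa p).
Local Notation si := (p_sigma p). Local Notation rh := (p_rho p).
Local Notation be := (p_beta p). Local Notation cc := (p_c p).
Local Notation yb := (p_ybar p).
Hypothesis Hk : 0 < ka.
Hypothesis Hs : 0 < si.
Hypothesis Hr : 0 < rh.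
Hypothesis Hb : 0 < be.
Hypothesis Hc : 0 <= cc.
Hypothesis Hyb : 0 < yb.
Variable Ft : R -> R.
Hypothesis HH : Hfun p (Ft yb) = 0.
Hypothesis HODE : forall y, 0 <= y <= yb ->
  Dfun p y (Ft y) <> 0 /\ deriv_within Ft 0 yb y (Gfun p y (Ft y)).
Hypothesis Hmono : forall y1 y2, 0 <= y1 -> y1 < y2 -> y2 <= yb -> Ffun p Ft y1 < Ffun p Ft y2.

Local Notation ps := (dpsi p).
Ltac Rq := Req; cbv beta.

Lemma ps_d (k : nat) (x : R) : is_derive (ps k) x (ps (S k) x).
Proof. apply dpsi_deriv; auto. Qed.
Lemma ps_c (k : nat) (x : R) : continuous (ps k) x.
Proof. apply dpsi_cont; auto. Qed.
Lemma ps0_eq (x : R) : psi p x = ps 0 x.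
Proof. reflexivity. Qed.

Lemma Gam_nz : pGam p <> 0.
Proof.
  intros HG. destruct (HODE 0 ltac:(lra)) as [HD _]. apply HD.
  unfold Dfun. rewrite ps0_eq, dpsi_formula by auto. rewrite HG. unfold Rdiv. rewrite Rinv_0. ring.
Qed.

Lemma Q0_pos' (z : R) : 0 < Qk p 0 z.
Proof. apply Q0_pos; auto. apply Gam_nz. Qed.

Definition dQ0 (z : R) : R := ps 0 z * ps 3 z - ps 1 z * ps 2 z.

Lemma Q0_d (z : R) : is_derive (Qk p 0) z (dQ0 z).
Proof.
  unfold Qk, dQ0. simpl.
  eapply dR_eq. apply dR_minus. apply dR_mult. apply ps_d. apply ps_d.
  apply (dR_ext (fun t => ps 1 t * ps 1 t)). intros; simpl; ring.
  apply dR_mult; apply ps_d. simpl. ring.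
Qed.

Lemma DQ0 (z : R) : Derive (Qk p 0) z = dQ0 z.
Proof. apply is_derive_unique. apply Q0_d. Qed.

Definition Dx (y u : R) : R :=
  ps 0 u * ((rh + ka) * (cc - Rtilde p u y) * Qk p 1 u + dQ0 u).
Lemma Dfun_eq (y u : R) : Dfun p y u = Dx y u.
Proof. unfold Dfun, Dx. rewrite DQ0. reflexivity. Qed.

Lemma Rtilde_C2 (x y : R) : C2 (fun u y => Rtilde p u y) x y.
Proof.
  unfold Rtilde. apply C2_mult. 2: apply C2_const.
  apply C2_minus. apply C2_plus. apply C2_const. apply C2_mult. apply C2_const. apply C2_fst.
  apply C2_mult. apply C2_const. apply C2_snd.
Qed.

Lemma psu_C2 (k : nat) (y u : R) : C2 (fun y u => ps k u) y u.
Proof. apply (C2_ofy (ps k)). apply ps_c. Qed.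

Lemma Qk_c (k : nat) (u : R) : continuous (Qk p k) u.
Proof.
  unfold Qk. apply cR_minus. apply cR_mult; apply ps_c. apply cR_pow. apply ps_c.
Qed.

Lemma Dx_C2 (y u : R) : C2 Dx y u.
Proof.
  unfold Dx. apply C2_mult. apply psu_C2. apply C2_plus.
  apply C2_mult. apply C2_mult. apply C2_const.
  apply C2_minus. apply C2_const. apply (C2_comp2 (fun u y => Rtilde p u y) (fun y u => u) (fun y u => y)).
  apply C2_snd. apply C2_fst. apply Rtilde_C2.
  apply (C2_ofy (Qk p 1)). apply Qk_c.
  apply (C2_ofy dQ0). unfold dQ0. apply cR_minus; apply cR_mult; apply ps_c.
Qed.

Definition Nx (y u : R) : R := Nfun p y u.
Lemma Nx_C2 (y u : R) : C2 Nx y u.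
Proof.
  unfold Nx, Nfun. apply C2_mult. apply (C2_ofy (Qk p 0)). apply Qk_c.
  apply C2_plus. apply C2_plus. apply C2_mult. apply C2_const. apply psu_C2.
  apply C2_mult. apply C2_mult. apply C2_const.
  apply C2_minus. apply C2_const. apply (C2_comp2 (fun u y => Rtilde p u y) (fun y u => u) (fun y u => y)).
  apply C2_snd. apply C2_fst. apply Rtilde_C2.
  apply psu_C2. apply psu_C2.
Qed.

Definition Gx (y u : R) : R := be * Nx y u / Dx y u.
Lemma Gfun_eq (y u : R) : Gfun p y u = Gx y u.
Proof. unfold Gfun, Gx, Nx. rewrite Dfun_eq. reflexivity. Qed.

Lemma Gx_C2 (y u : R) : Dx y u <> 0 -> C2 Gx y u.
Proof.
  intros HD. unfold Gx, Rdiv. apply C2_mult. apply C2_mult. apply C2_const. apply Nx_C2.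
  apply (C2_comp1 Rinv Dx). apply Dx_C2. apply continuous_Rinv. auto.
Qed.

Definition ct (y : R) : R := Rmax 0 (Rmin yb y).
Lemma ct_range (y : R) : 0 <= ct y <= yb.
Proof. unfold ct. split. apply Rmax_l. apply Rmax_lub. lra. apply Rmin_l. Qed.
Lemma ct_id (y : R) : 0 <= y <= yb -> ct y = y.
Proof. intros H. unfold ct. rewrite Rmin_right by lra. rewrite Rmax_right by lra. auto. Qed.
Lemma ct_lip (y y' : R) : Rabs (ct y' - ct y) <= Rabs (y' - y).
Proof.
  unfold ct, Rmax, Rmin. repeat destruct Rle_dec; unfold Rabs; repeat destruct Rcase_abs; lra.
Qed.

Lemma Ft_contw (y : R) : 0 <= y <= yb -> forall eps, 0 < eps -> exists d, 0 < d /\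
  forall y', 0 <= y' <= yb -> Rabs (y' - y) < d -> Rabs (Ft y' - Ft y) < eps.
Proof. intros Hy. destruct (HODE y Hy) as [_ Hd]. eapply dw_cont. exact Hd. Qed.

Definition Ftc (y : R) : R := Ft (ct y).
Lemma Ftc_c (y : R) : continuous Ftc y.
Proof.
  apply continuity_pt_filterlim. intros eps Heps.
  destruct (Ft_contw (ct y) (ct_range y) eps Heps) as [d [Hd Hh]].
  exists d. split; auto. intros y' [_ Hy']. unfold Ftc, R_dist. change (Rabs (Ft (ct y') - Ft (ct y)) < eps). apply Hh. apply ct_range.
  generalize (ct_lip y y'). change (Rabs (y' - y) < d) in Hy'. lra.
Qed.

Lemma ct_c (y : R) : continuous ct y.
Proof.
  apply continuity_pt_filterlim. intros eps Heps. exists eps. split; auto.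
  intros y' [_ Hy']. change (Rabs (y' - y) < eps) in Hy'. change (Rabs (ct y' - ct y) < eps).
  generalize (ct_lip y y'). lra.
Qed.

Lemma Dx_nz (y : R) : 0 <= y <= yb -> Dx y (Ft y) <> 0.
Proof. intros Hy. rewrite <- Dfun_eq. apply HODE; auto. Qed.

Definition Gsc (y : R) : R := Gx (ct y) (Ftc y).
Lemma Gsc_c (y : R) : continuous Gsc y.
Proof.
  apply (C2_to1 Gx ct Ftc). apply ct_c. apply Ftc_c. apply Gx_C2. apply Dx_nz. apply ct_range.
Qed.

Lemma Gsc_in (y : R) : 0 <= y <= yb -> Gsc y = Gfun p y (Ft y).
Proof. intros Hy. unfold Gsc, Ftc. rewrite ct_id by auto. rewrite Gfun_eq. auto. Qed.

Definition Fte (y : R) : R := Ftc y + Gsc 0 * Rmin y 0 + Gsc yb * Rmax (y - yb) 0.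

Lemma Fte_in (y : R) : 0 <= y <= yb -> Fte y = Ft y.
Proof.
  intros Hy. unfold Fte, Ftc. rewrite ct_id by auto. rewrite Rmin_right, Rmax_right by lra. ring.
Qed.
Lemma Fte_lo (y : R) : y <= 0 -> Fte y = Ft 0 + Gsc 0 * y.
Proof.
  intros Hy. unfold Fte, Ftc, ct. rewrite Rmin_right by lra. rewrite Rmax_left by lra.
  rewrite Rmin_left by lra. rewrite Rmax_right by lra. ring.
Qed.
Lemma Fte_hi (y : R) : yb <= y -> Fte y = Ft yb + Gsc yb * (y - yb).
Proof.
  intros Hy. unfold Fte, Ftc, ct. rewrite Rmin_left by lra. rewrite Rmax_right by lra.
  rewrite Rmin_right by lra. rewrite Rmax_left by lra. ring.
Qed.

Lemma ct_lo (y : R) : y <= 0 -> ct y = 0.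
Proof. intros. unfold ct. rewrite Rmin_right by lra. rewrite Rmax_left by lra. auto. Qed.
Lemma ct_hi (y : R) : yb <= y -> ct y = yb.
Proof. intros. unfold ct. rewrite Rmin_left by lra. rewrite Rmax_right by lra. auto. Qed.
Lemma Gsc_lo (y : R) : y <= 0 -> Gsc y = Gsc 0.
Proof. intros. unfold Gsc, Ftc. rewrite (ct_lo y), (ct_lo 0) by lra. auto. Qed.
Lemma Gsc_hi (y : R) : yb <= y -> Gsc y = Gsc yb.
Proof. intros. unfold Gsc, Ftc. rewrite (ct_hi y), (ct_hi yb) by lra. auto. Qed.

Lemma Fte_d (y : R) : is_derive Fte y (Gsc y).
Proof.
  apply is_derive_Reals. intros eps Heps.
  destruct (Rlt_le_dec y 0) as [Hy0|Hy0].
  - exists (mkposreal (- y) ltac:(lra)). intros h Hh Hhd. simpl in Hhd.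
    apply Rabs_lt_between in Hhd.
    rewrite !Fte_lo by lra. rewrite (Gsc_lo y) by lra.
    replace ((Ft 0 + Gsc 0 * (y + h) - (Ft 0 + Gsc 0 * y)) / h - Gsc 0) with 0 by (field; auto).
    rewrite Rabs_R0. auto.
  - destruct (Rlt_le_dec yb y) as [Hy1|Hy1].
    + exists (mkposreal (y - yb) ltac:(lra)). intros h Hh Hhd. simpl in Hhd.
      apply Rabs_lt_between in Hhd.
      rewrite !Fte_hi by lra. rewrite (Gsc_hi y) by lra.
      replace ((Ft yb + Gsc yb * (y + h - yb) - (Ft yb + Gsc yb * (y - yb))) / h - Gsc yb) with 0
        by (field; auto).
      rewrite Rabs_R0. auto.
    + destruct (HODE y (conj Hy0 Hy1)) as [_ Hd].
      destruct (dw_elim _ _ _ _ _ Hd eps Heps) as [d1 [Hd1 Hq]].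
      rewrite (Gsc_in y) by lra.
      destruct (Req_dec y 0) as [->|Hy0'].
      * exists (mkposreal (Rmin d1 yb) ltac:(apply Rmin_pos; lra)). intros h Hh Hhd. simpl in Hhd.
        assert (Hm1 := Rmin_l d1 yb). assert (Hm2 := Rmin_r d1 yb).
        apply Rabs_lt_between in Hhd as Hhd'.
        destruct (Rlt_le_dec h 0) as [Hn|Hn].
        -- rewrite Fte_lo by lra. rewrite (Fte_in 0) by lra. rewrite (Gsc_in 0) by lra.
           replace ((Ft 0 + Gfun p 0 (Ft 0) * (0 + h) - Ft 0) / h - Gfun p 0 (Ft 0)) with 0 by (field; auto).
           rewrite Rabs_R0. auto.
        -- rewrite !Fte_in by lra. apply Hq; auto; lra.
      * destruct (Req_dec y yb) as [->|Hy1'].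
        -- exists (mkposreal (Rmin d1 yb) ltac:(apply Rmin_pos; lra)). intros h Hh Hhd. simpl in Hhd.
           assert (Hm1 := Rmin_l d1 yb). assert (Hm2 := Rmin_r d1 yb).
           apply Rabs_lt_between in Hhd as Hhd'.
           destruct (Rlt_le_dec 0 h) as [Hn|Hn].
           ++ rewrite Fte_hi by lra. rewrite (Fte_in yb) by lra. rewrite (Gsc_in yb) by lra.
              replace ((Ft yb + Gfun p yb (Ft yb) * (yb + h - yb) - Ft yb) / h - Gfun p yb (Ft yb)) with 0
                by (field; auto).
              rewrite Rabs_R0. auto.
           ++ rewrite !Fte_in by lra. apply Hq; auto; lra.
        -- exists (mkposreal (Rmin d1 (Rmin y (yb - y))) ltac:(apply Rmin_pos; [lra| apply Rmin_pos; lra])).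
           intros h Hh Hhd. simpl in Hhd.
           assert (Hm1 := Rmin_l d1 (Rmin y (yb - y))). assert (Hm2 := Rmin_r d1 (Rmin y (yb - y))).
           assert (Hm3 := Rmin_l y (yb - y)). assert (Hm4 := Rmin_r y (yb - y)).
           apply Rabs_lt_between in Hhd as Hhd'.
           rewrite !Fte_in by lra. apply Hq; auto; lra.
Qed.

Lemma Fte_c (y : R) : continuous Fte y.
Proof. eapply dR_cont. apply Fte_d. Qed.

Lemma cR_inv (f : R -> R) (x : R) : continuous f x -> f x <> 0 -> continuous (fun t => / f t) x.
Proof. intros H1 H2. apply (continuous_Rinv_comp f x H1 H2). Qed.

Lemma psF_d (k : nat) (z : R) : is_derive (fun t => ps k (Fte t)) z (ps (S k) (Fte z) * Gsc z).
Proof. apply (dR_comp (ps k) Fte). apply ps_d. apply Fte_d. Qed.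
Lemma psF_c (k : nat) (z : R) : continuous (fun t => ps k (Fte t)) z.
Proof. eapply dR_cont. apply psF_d. Qed.

Definition Pn (z : R) : R := ps 1 (Fte z) * (cc - Rtilde p (Fte z) z) + / (rh + ka) * ps 0 (Fte z).
Definition Den (z : R) : R := - be * Qk p 0 (Fte z).
Definition dRt (z : R) : R := (rh * Gsc z - be * (rh + 2 * ka)) / (rh * (rh + ka)).
Definition dPn (z : R) : R :=
  ps 2 (Fte z) * Gsc z * (cc - Rtilde p (Fte z) z) + ps 1 (Fte z) * (- dRt z)
  + / (rh + ka) * (ps 1 (Fte z) * Gsc z).
Definition dDen (z : R) : R := - be * (dQ0 (Fte z) * Gsc z).
Definition Ae (z : R) : R := Afun p Fte z.
Definition Ad (z : R) : R := (dPn z * Den z - Pn z * dDen z) / (Den z) ^ 2.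

Lemma Ae_eq (z : R) : Ae z = Pn z / Den z.
Proof. reflexivity. Qed.

Lemma Den_nz (z : R) : Den z <> 0.
Proof. unfold Den. generalize (Q0_pos' (Fte z)). intros. apply Rmult_integral_contrapositive_currified; lra. Qed.

Lemma Rt_d (z : R) : is_derive (fun t => Rtilde p (Fte t) t) z (dRt z).
Proof.
  unfold Rtilde, dRt. apply (dR_ext (fun t => / (rh * (rh + ka)) * ((mu * ka) + rh * Fte t - be * (rh + 2 * ka) * t))).
  intros; Req; unfold Rdiv; ring.
  eapply dR_eq. apply dR_scal. apply dR_minus. apply dR_plus. apply dR_const. apply dR_scal. apply Fte_d.
  apply dR_scal. apply dR_id. Req. field. split; lra.
Qed.

Lemma Pn_d (z : R) : is_derive Pn z (dPn z).
Proof.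
  unfold Pn, dPn. eapply dR_eq. apply dR_plus. apply dR_mult. apply psF_d.
  apply dR_minus. apply dR_const. apply Rt_d. apply dR_scal. apply psF_d.
  Rq. ring.
Qed.

Lemma Den_d (z : R) : is_derive Den z (dDen z).
Proof.
  unfold Den, dDen. apply dR_scal. apply (dR_comp (Qk p 0) Fte). apply Q0_d. apply Fte_d.
Qed.

Lemma Ae_d (z : R) : is_derive Ae z (Ad z).
Proof.
  apply (dR_ext (fun t => Pn t / Den t)). intros; reflexivity.
  unfold Ad. apply is_derive_div. apply Pn_d. apply Den_d. apply Den_nz.
Qed.

Lemma Ae_c (z : R) : continuous Ae z.
Proof. eapply dR_cont. apply Ae_d. Qed.

Lemma Rt_c (z : R) : continuous (fun t => Rtilde p (Fte t) t) z.
Proof. eapply dR_cont. apply Rt_d. Qed.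

Lemma Ad_c (z : R) : continuous Ad z.
Proof.
  unfold Ad, Rdiv. apply cR_mult.
  - apply cR_minus; apply cR_mult.
    + unfold dPn. apply cR_plus. apply cR_plus.
      apply cR_mult. apply cR_mult. apply psF_c. apply Gsc_c. apply cR_minus. apply cR_const. apply Rt_c.
      apply cR_mult. apply psF_c. apply cR_opp. unfold dRt, Rdiv. apply cR_mult. apply cR_minus.
      apply cR_mult. apply cR_const. apply Gsc_c. apply cR_const. apply cR_const.
      apply cR_mult. apply cR_const. apply cR_mult. apply psF_c. apply Gsc_c.
    + apply dR_cont with (l := dDen z). apply Den_d.
    + apply dR_cont with (l := dPn z). apply Pn_d.
    + unfold dDen. apply cR_mult. apply cR_const. apply cR_mult.
      apply (cR_comp dQ0 Fte). apply Fte_c. unfold dQ0. apply cR_minus; apply cR_mult; apply ps_c.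
      apply Gsc_c.
  - apply cR_inv. apply cR_pow. apply dR_cont with (l := dDen z). apply Den_d.
    apply pow_nonzero. apply Den_nz.
Qed.

Definition Ry (x z : R) : R := x / (rh + ka) + mu * ka / (rh * (rh + ka)) - 2 * ka * be * z / (rh * (rh + ka)).
Definition Phi (x z : R) : R := Ae z * ps 0 (x + be * z) + Rfun p x z - cc * z.
Definition Phix (x z : R) : R := Ae z * ps 1 (x + be * z) + z / (rh + ka).
Definition Phixx (x z : R) : R := Ae z * ps 2 (x + be * z).
Definition Phiz (x z : R) : R := Ad z * ps 0 (x + be * z) + Ae z * be * ps 1 (x + be * z) + Ry x z - cc.
Definition Phixz (x z : R) : R := Ad z * ps 1 (x + be * z) + Ae z * be * ps 2 (x + be * z) + / (rh + ka).
Definition Phixxz (x z : R) : R := Ad z * ps 2 (x + be * z) + Ae z * be * ps 3 (x + be * z).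

Lemma psx_d (k : nat) (x z : R) : is_derive (fun s => ps k (s + be * z)) x (ps (S k) (x + be * z)).
Proof.
  eapply dR_eq. apply (dR_comp (ps k) (fun s => s + be * z)). apply ps_d.
  apply (dR_ext (fun s => 1 * s + be * z)). intros; Rq; ring. apply dR_lin. Rq; ring.
Qed.
Lemma psz_d (k : nat) (x z : R) : is_derive (fun s => ps k (x + be * s)) z (ps (S k) (x + be * z) * be).
Proof.
  apply (dR_comp (ps k) (fun s => x + be * s)). apply ps_d.
  apply (dR_ext (fun s => be * s + x)). intros; Rq; ring. apply dR_lin.
Qed.

Lemma Phi_dx (x z : R) : is_derive (fun s => Phi s z) x (Phix x z).
Proof.
  unfold Phi, Phix, Rfun. eapply dR_eq. apply dR_minus. apply dR_plus. apply dR_scal. apply psx_d.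
  apply (dR_ext (fun s => (z / (rh + ka)) * s + (mu * ka * z / (rh * (rh + ka)) - ka * be * z ^ 2 / (rh * (rh + ka))))).
  intros; Rq; field; lra. apply dR_lin. apply dR_const. Rq; ring.
Qed.
Lemma Phix_dx (x z : R) : is_derive (fun s => Phix s z) x (Phixx x z).
Proof.
  unfold Phix, Phixx. eapply dR_eq. apply dR_plus. apply dR_scal. apply psx_d. apply dR_const. Rq; ring.
Qed.
Lemma Phiz_dx (x z : R) : is_derive (fun s => Phiz s z) x (Phixz x z).
Proof.
  unfold Phiz, Phixz, Ry. eapply dR_eq. apply dR_minus. apply dR_plus. apply dR_plus.
  apply dR_scal. apply psx_d. apply dR_scal. apply psx_d.
  apply (dR_ext (fun s => (/ (rh + ka)) * s + (mu * ka / (rh * (rh + ka)) - 2 * ka * be * z / (rh * (rh + ka))))).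
  intros; Rq; field; lra. apply dR_lin. apply dR_const. Rq; ring.
Qed.
Lemma Phixz_dx (x z : R) : is_derive (fun s => Phixz s z) x (Phixxz x z).
Proof.
  unfold Phixz, Phixxz. eapply dR_eq. apply dR_plus. apply dR_plus.
  apply dR_scal. apply psx_d. apply dR_scal. apply psx_d. apply dR_const. Rq; ring.
Qed.
Lemma Phi_dz (x z : R) : is_derive (fun s => Phi x s) z (Phiz x z).
Proof.
  unfold Phi, Phiz, Rfun, Ry. eapply dR_eq. apply dR_minus. apply dR_plus.
  apply dR_mult. apply Ae_d. apply psz_d.
  apply (dR_ext (fun s => / (rh * (rh + ka)) * ((rh * x + mu * ka) * s - ka * be * s ^ 2))).
  intros; Rq; field; lra.
  apply dR_scal. apply dR_minus. apply dR_scal. apply dR_id.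
  apply dR_scal. apply (dR_ext (fun s => s * s)). intros; Rq; ring. apply dR_mult; apply dR_id.
  apply dR_scal. apply dR_id. Rq. field. lra.
Qed.
Lemma Phix_dz (x z : R) : is_derive (fun s => Phix x s) z (Phixz x z).
Proof.
  unfold Phix, Phixz. eapply dR_eq. apply dR_plus. apply dR_mult. apply Ae_d. apply psz_d.
  apply (dR_ext (fun s => / (rh + ka) * s + 0)). intros; Rq; field; lra. apply dR_lin.
  Rq. ring.
Qed.

Lemma psxz_C2 (k : nat) (x z : R) : C2 (fun x z => ps k (x + be * z)) x z.
Proof.
  apply (C2_comp1 (ps k) (fun x z => x + be * z)). apply C2_plus. apply C2_fst.
  apply C2_mult. apply C2_const. apply C2_snd. apply ps_c.
Qed.
Lemma Ae_C2 (x z : R) : C2 (fun x z => Ae z) x z.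
Proof. apply (C2_ofy Ae). apply Ae_c. Qed.
Lemma Ad_C2 (x z : R) : C2 (fun x z => Ad z) x z.
Proof. apply (C2_ofy Ad). apply Ad_c. Qed.

Lemma C2_pow2 (f : R -> R -> R) x z : C2 f x z -> C2 (fun x z => f x z ^ 2) x z.
Proof. intros H. apply (C2_comp1 (fun t => t ^ 2) f). auto. apply cR_pow. apply cR_id. Qed.

Lemma Rfun_C2 (x z : R) : C2 (fun x z => Rfun p x z) x z.
Proof.
  unfold Rfun, Rdiv. apply C2_minus. apply C2_plus.
  - apply C2_mult. apply C2_mult. apply C2_fst. apply C2_snd. apply C2_const.
  - apply C2_mult. apply C2_mult. apply C2_const. apply C2_snd. apply C2_const.
  - apply C2_mult. apply C2_mult. apply C2_const. apply C2_pow2. apply C2_snd. apply C2_const.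
Qed.
Lemma Ry_C2 (x z : R) : C2 Ry x z.
Proof.
  unfold Ry, Rdiv. apply C2_minus. apply C2_plus.
  - apply C2_mult. apply C2_fst. apply C2_const.
  - apply C2_const.
  - apply C2_mult. apply C2_mult. apply C2_const. apply C2_snd. apply C2_const.
Qed.

Lemma Phi_C2 (x z : R) : C2 Phi x z.
Proof.
  unfold Phi. apply C2_minus. apply C2_plus. apply C2_mult. apply Ae_C2. apply psxz_C2.
  apply Rfun_C2. apply C2_mult. apply C2_const. apply C2_snd.
Qed.
Lemma Phix_C2 (x z : R) : C2 Phix x z.
Proof.
  unfold Phix, Rdiv. apply C2_plus. apply C2_mult. apply Ae_C2. apply psxz_C2.
  apply C2_mult. apply C2_snd. apply C2_const.
Qed.
Lemma Phixx_C2 (x z : R) : C2 Phixx x z.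
Proof. unfold Phixx. apply C2_mult. apply Ae_C2. apply psxz_C2. Qed.
Lemma Phiz_C2 (x z : R) : C2 Phiz x z.
Proof.
  unfold Phiz. apply C2_minus. apply C2_plus. apply C2_plus.
  apply C2_mult. apply Ad_C2. apply psxz_C2.
  apply C2_mult. apply C2_mult. apply Ae_C2. apply C2_const. apply psxz_C2.
  apply Ry_C2. apply C2_const.
Qed.
Lemma Phixz_C2 (x z : R) : C2 Phixz x z.
Proof.
  unfold Phixz. apply C2_plus. apply C2_plus.
  apply C2_mult. apply Ad_C2. apply psxz_C2.
  apply C2_mult. apply C2_mult. apply Ae_C2. apply C2_const. apply psxz_C2.
  apply C2_const.
Qed.
Lemma Phixxz_C2 (x z : R) : C2 Phixxz x z.
Proof.
  unfold Phixxz. apply C2_plus.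
  apply C2_mult. apply Ad_C2. apply psxz_C2.
  apply C2_mult. apply C2_mult. apply Ae_C2. apply C2_const. apply psxz_C2.
Qed.

Lemma smooth_fit (z : R) : 0 <= z <= yb ->
  Phiz (Fte z - be * z) z = 0 /\ Phixz (Fte z - be * z) z = 0.
Proof.
  intros Hz.
  assert (Hu : Fte z - be * z + be * z = Fte z) by ring.
  assert (HRy : Ry (Fte z - be * z) z = Rtilde p (Fte z) z).
  { unfold Ry, Rtilde. field. split; lra. }
  unfold Phiz, Phixz. rewrite Hu, HRy.
  unfold Ad, Ae. rewrite Ae_eq. unfold Pn, Den, dPn, dDen, dRt, dQ0.
  assert (HG : Gsc z = Gx z (Fte z)) by (rewrite Gsc_in, Gfun_eq, Fte_in by auto; reflexivity).
  assert (HD : Dx z (Fte z) <> 0) by (rewrite Fte_in by auto; apply Dx_nz; auto).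
  generalize (Q0_pos' (Fte z)). intros HQ.
  unfold Gx, Nx, Nfun, Dx, dQ0 in HG, HD. unfold Qk in HG, HD, HQ. 
  change (0 + 2)%nat with 2%nat in *. change (0 + 1)%nat with 1%nat in *.
  change (1 + 2)%nat with 3%nat in *. change (1 + 1)%nat with 2%nat in *.
  assert (Hp0 : ps 0 (Fte z) <> 0) by (intros E; apply HD; rewrite E; ring).
  assert (HB : (rh + ka) * (cc - Rtilde p (Fte z) z) * (ps 1 (Fte z) * ps 3 (Fte z) - ps 2 (Fte z) ^ 2) +
     (ps 0 (Fte z) * ps 3 (Fte z) - ps 1 (Fte z) * ps 2 (Fte z)) <> 0)
    by (intros E; apply HD; rewrite E; ring).
  apply (smooth_alg rh ka be cc (Rtilde p (Fte z) z) (ps 0 (Fte z)) (ps 1 (Fte z)) (ps 2 (Fte z)) (ps 3 (Fte z)) (Gsc z)); try lra; auto.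
Qed.

Definition Fe (y : R) : R := Fte y - be * y.
Lemma Fe_c (y : R) : continuous Fe y.
Proof. unfold Fe. apply cR_minus. apply Fte_c. apply cR_mult. apply cR_const. apply cR_id. Qed.
Lemma Fe_in (y : R) : 0 <= y <= yb -> Fe y = Ffun p Ft y.
Proof. intros. unfold Fe, Ffun. rewrite Fte_in by auto. auto. Qed.
Lemma Fe_lt (a b : R) : 0 <= a -> a < b -> b <= yb -> Fe a < Fe b.
Proof. intros. rewrite !Fe_in by lra. apply Hmono; auto. Qed.
Lemma Fe_le (a b : R) : 0 <= a -> a <= b -> b <= yb -> Fe a <= Fe b.
Proof. intros. destruct (Req_dec a b) as [->|]. lra. apply Rlt_le, Fe_lt; lra. Qed.
Lemma Fe_lt_inv (a b : R) : 0 <= a <= yb -> 0 <= b <= yb -> Fe a < Fe b -> a < b.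
Proof. intros Ha Hb' H. destruct (Rlt_le_dec a b); auto. generalize (Fe_le b a ltac:(lra) r ltac:(lra)). lra. Qed.
Lemma Fe_le_inv (a b : R) : 0 <= a <= yb -> 0 <= b <= yb -> Fe a <= Fe b -> a <= b.
Proof. intros Ha Hb' H. destruct (Rle_lt_dec a b); auto. generalize (Fe_lt b a ltac:(lra) r ltac:(lra)). lra. Qed.

Lemma xbar_eq : xbar p Ft = Fe yb.
Proof. unfold xbar. rewrite Fe_in by lra. auto. Qed.

Lemma Finv_spec (x : R) : Fe 0 <= x <= Fe yb ->
  0 <= Finv p Ft x <= yb /\ Fe (Finv p Ft x) = x.
Proof.
  intros Hx.
  assert (Hex : exists y, 0 <= y <= yb /\ Ffun p Ft y = x).
  { destruct (IVT_gen_consistent Fe 0 yb x Fe_c) as [y [Hy Hfy]].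
    rewrite Rmin_left, Rmax_right; auto. apply Fe_le; lra. apply Fe_le; lra.
    rewrite Rmin_left, Rmax_right in Hy by lra. exists y. split; auto. rewrite <- Fe_in; auto. }
  generalize (epsilon_spec (inhabits 0) (fun y => 0 <= y <= yb /\ Ffun p Ft y = x) Hex).
  unfold Finv. intros [H1 H2]. split; auto. rewrite Fe_in; auto.
Qed.

Definition Gi (x : R) : R :=
  if Rlt_dec x (Fe 0) then 0 else if Rlt_dec x (Fe yb) then Finv p Ft x else yb.

Lemma Gi_range (x : R) : 0 <= Gi x <= yb.
Proof.
  unfold Gi. destruct Rlt_dec. lra. destruct Rlt_dec. apply Finv_spec. lra. lra.
Qed.
Lemma Gi_lo (x : R) : x < Fe 0 -> Gi x = 0.
Proof. intros. unfold Gi. destruct Rlt_dec; [auto| lra]. Qed.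
Lemma Gi_hi (x : R) : Fe yb <= x -> Gi x = yb.
Proof.
  intros. unfold Gi. assert (Fe 0 < Fe yb) by (apply Fe_lt; lra).
  destruct Rlt_dec. lra. destruct Rlt_dec. lra. auto.
Qed.
Lemma Fe_Gi (x : R) : Fe 0 <= x <= Fe yb -> Fe (Gi x) = x.
Proof.
  intros Hx. unfold Gi. destruct Rlt_dec. lra. destruct Rlt_dec. apply Finv_spec; lra.
  lra.
Qed.
Lemma Gi_Fe (y : R) : 0 <= y <= yb -> Gi (Fe y) = y.
Proof.
  intros Hy. assert (H := Fe_Gi (Fe y) ltac:(split; apply Fe_le; lra)).
  assert (H2 := Gi_range (Fe y)).
  destruct (Rlt_le_dec (Gi (Fe y)) y). generalize (Fe_lt (Gi (Fe y)) y ltac:(lra) r ltac:(lra)). lra.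
  destruct (Req_dec (Gi (Fe y)) y); auto. generalize (Fe_lt y (Gi (Fe y)) ltac:(lra) ltac:(lra) ltac:(lra)). lra.
Qed.
Lemma FGi_le (x : R) : Fe 0 <= x -> Fe (Gi x) <= x.
Proof.
  intros Hx. destruct (Rle_lt_dec x (Fe yb)). rewrite Fe_Gi; lra. rewrite Gi_hi; lra.
Qed.
Lemma FGi_ge (x : R) : x <= Fe yb -> x <= Fe (Gi x).
Proof.
  intros Hx. destruct (Rle_lt_dec (Fe 0) x). rewrite Fe_Gi; lra. rewrite Gi_lo; lra.
Qed.
Lemma Gi_mono (x x' : R) : x <= x' -> Gi x <= Gi x'.
Proof.
  intros Hxx.
  destruct (Rlt_le_dec x (Fe 0)). rewrite (Gi_lo x) by auto. generalize (Gi_range x'); lra.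
  destruct (Rle_lt_dec (Fe yb) x'). rewrite (Gi_hi x') by auto. generalize (Gi_range x); lra.
  apply Fe_le_inv; try apply Gi_range. rewrite !Fe_Gi by (split; lra). lra.
Qed.

Lemma cont_of_ed (f : R -> R) (x : R) :
  (forall eps, 0 < eps -> exists d, 0 < d /\ forall x', Rabs (x' - x) < d -> Rabs (f x' - f x) < eps) ->
  continuous f x.
Proof.
  intros H. apply continuity_pt_filterlim. intros eps Heps. destruct (H eps Heps) as [d [Hd Hh]].
  exists d. split; auto. intros x' [_ Hx']. apply Hh. exact Hx'.
Qed.

Lemma Gi_c (x : R) : continuous Gi x.
Proof.
  apply cont_of_ed. intros eps Heps. set (g := Gi x).
  assert (Hg := Gi_range x). fold g in Hg.
  assert (Hup : exists d1, 0 < d1 /\ forall x', Rabs (x' - x) < d1 -> Gi x' < g + eps).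
  { destruct (Rlt_le_dec yb (g + eps / 2)) as [H1|H1].
    - exists 1. split. lra. intros x' _. generalize (Gi_range x'). lra.
    - assert (Hx : x < Fe yb).
      { destruct (Rlt_le_dec x (Fe yb)); auto. unfold g in *. rewrite Gi_hi in H1 by auto. lra. }
      assert (Hlt : Fe g < Fe (g + eps / 2)) by (apply Fe_lt; lra).
      assert (Hxg : x <= Fe g) by (apply FGi_ge; lra).
      exists (Fe (g + eps / 2) - x). split. lra. intros x' Hx'. apply Rabs_lt_between' in Hx'.
      assert (Gi x' <= Gi (Fe (g + eps / 2))) by (apply Gi_mono; lra).
      rewrite Gi_Fe in H by lra. lra. }
  assert (Hlo : exists d2, 0 < d2 /\ forall x', Rabs (x' - x) < d2 -> g - eps < Gi x').
  { destruct (Rlt_le_dec (g - eps / 2) 0) as [H1|H1].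
    - exists 1. split. lra. intros x' _. generalize (Gi_range x'). lra.
    - assert (Hx : Fe 0 <= x).
      { destruct (Rlt_le_dec x (Fe 0)); auto. unfold g in *. rewrite Gi_lo in H1 by auto. lra. }
      assert (Hlt : Fe (g - eps / 2) < Fe g) by (apply Fe_lt; lra).
      assert (Hxg : Fe g <= x) by (apply FGi_le; lra).
      exists (x - Fe (g - eps / 2)). split. lra. intros x' Hx'. apply Rabs_lt_between' in Hx'.
      assert (Gi (Fe (g - eps / 2)) <= Gi x') by (apply Gi_mono; lra).
      rewrite Gi_Fe in H by lra. lra. }
  destruct Hup as [d1 [Hd1 H1]]. destruct Hlo as [d2 [Hd2 H2]].
  exists (Rmin d1 d2). split. apply Rmin_pos; auto. intros x' Hx'.
  generalize (Rmin_l d1 d2) (Rmin_r d1 d2). intros. apply Rabs_lt_between'.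
  specialize (H1 x' ltac:(lra)). specialize (H2 x' ltac:(lra)). fold g. lra.
Qed.

Definition Mx (x y : R) : R := Rmax y (Gi x).
Lemma Mx_range (x y : R) : 0 <= y <= yb -> 0 <= Mx x y <= yb.
Proof. intros. unfold Mx. generalize (Gi_range x). unfold Rmax; destruct Rle_dec; lra. Qed.
Lemma Mx_C2 (x y : R) : C2 Mx x y.
Proof.
  unfold Mx. apply (C2_comp2 Rmax (fun x y => y) (fun x y => Gi x)). apply C2_snd.
  apply (C2_ofx Gi). apply Gi_c. apply C2_Rmax.
Qed.

Lemma key_lemma (Psi Psix Psiz : R -> R -> R) (Mf : R -> R) (x L : R) :
  0 <= L ->
  is_derive (fun s => Psi s (Mf x)) x (Psix x (Mf x)) ->
  (forall x' xi, Rabs (x' - x) <= 1 -> Rmin (Mf x) (Mf x') <= xi <= Rmax (Mf x) (Mf x') ->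
     is_derive (fun z => Psi x' z) xi (Psiz x' xi)) ->
  (forall x' xi, Rabs (x' - x) <= 1 -> Mf x <> Mf x' -> Rmin (Mf x) (Mf x') <= xi <= Rmax (Mf x) (Mf x') ->
     Rabs (Psiz x' xi) <= L * Rabs (x' - x)) ->
  continuous Mf x ->
  is_derive (fun s => Psi s (Mf s)) x (Psix x (Mf x)).
Proof.
  intros HL H1 H2 H3 HM.
  apply is_derive_Reals. apply is_derive_Reals in H1. intros eps Heps.
  destruct (H1 (eps / 2) ltac:(lra)) as [d1 Hd1].
  assert (HL1 : 0 < eps / (2 * (L + 1))) by (apply Rdiv_lt_0_compat; lra).
  apply continuity_pt_filterlim in HM.
  destruct (HM _ HL1) as [d2 [Hd2 HM2]].
  assert (Hd : 0 < Rmin 1 (Rmin d1 d2)) by (apply Rmin_pos; [lra| apply Rmin_pos; [apply cond_pos| auto]]).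
  exists (mkposreal _ Hd). intros h Hh0 Hh. simpl in Hh.
  assert (Hm1 := Rmin_l 1 (Rmin d1 d2)). assert (Hm2 := Rmin_r 1 (Rmin d1 d2)).
  assert (Hm3 := Rmin_l d1 d2). assert (Hm4 := Rmin_r d1 d2).
  set (M := Mf x). set (M' := Mf (x + h)).
  assert (HMM : Rabs (M' - M) < eps / (2 * (L + 1))).
  { unfold M, M'. change (dist R_met (Mf (x + h)) (Mf x) < eps / (2 * (L + 1))). apply HM2.
    split. split. exact I. intros E; apply Hh0; lra.
    change (Rabs (x + h - x) < d2). replace (x + h - x) with h by ring. lra. }
  assert (Hxh : Rabs (x + h - x) <= 1) by (replace (x + h - x) with h by ring; lra).
  assert (HA : Rabs (Psi (x + h) M' - Psi (x + h) M) <= eps / 2 * Rabs h).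
  { destruct (Req_dec M M') as [E|E].
    - rewrite E, Rminus_diag, Rabs_R0. apply Rmult_le_pos. lra. apply Rabs_pos.
    - destruct (MVT_abs (fun z => Psi (x + h) z) (fun z => Psiz (x + h) z) M M') as [c [Hcc Hcr]].
      { intros c Hc0. apply is_derive_Reals. apply H2; auto. }
      rewrite Hcc. specialize (H3 (x + h) c Hxh E Hcr). replace (x + h - x) with h in H3 by ring.
      apply Rle_trans with (L * Rabs h * (eps / (2 * (L + 1)))).
      apply Rmult_le_compat; try apply Rabs_pos; auto. lra.
      replace (L * Rabs h * (eps / (2 * (L + 1)))) with (eps / 2 * Rabs h * (L / (L + 1))) by (field; lra).
      rewrite <- (Rmult_1_r (eps / 2 * Rabs h)) at 2. apply Rmult_le_compat_l.
      apply Rmult_le_pos. lra. apply Rabs_pos.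
      apply Rmult_le_reg_r with (L + 1). lra. unfold Rdiv. rewrite Rmult_assoc, Rinv_l by lra. lra. }
  assert (HB := Hd1 h Hh0 ltac:(lra)). fold M in HB.
  assert (Hsplit : (Psi (x + h) M' - Psi x M) / h - Psix x M =
    (Psi (x + h) M' - Psi (x + h) M) / h + ((Psi (x + h) M - Psi x M) / h - Psix x M)).
  { field. auto. }
  rewrite Hsplit.
  assert (Rabs ((Psi (x + h) M' - Psi (x + h) M) / h) <= eps / 2).
  { unfold Rdiv. rewrite Rabs_mult, Rabs_inv. assert (0 < Rabs h) by (apply Rabs_pos_lt; auto).
    apply Rmult_le_reg_r with (Rabs h); auto. rewrite Rmult_assoc, Rinv_l by lra. lra. }
  generalize (Rabs_triang ((Psi (x + h) M' - Psi (x + h) M) / h) ((Psi (x + h) M - Psi x M) / h - Psix x M)).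
  lra.
Qed.

Lemma order_lemma (x x' y xi : R) : 0 <= y <= yb -> Mx x y <> Mx x' y ->
  Rmin (Mx x y) (Mx x' y) <= xi <= Rmax (Mx x y) (Mx x' y) ->
  0 <= xi <= yb /\ Rabs (x' - Fe xi) <= Rabs (x' - x).
Proof.
  intros Hy Hne Hxi.
  assert (R1 := Mx_range x y Hy). assert (R2 := Mx_range x' y Hy).
  assert (Hrange : 0 <= xi <= yb).
  { split. apply Rle_trans with (Rmin (Mx x y) (Mx x' y)). apply Rmin_glb; lra. lra.
    apply Rle_trans with (Rmax (Mx x y) (Mx x' y)). lra. apply Rmax_lub; lra. }
  split; auto.
  assert (HGr := Gi_range x). assert (HGr' := Gi_range x').
  unfold Mx in *.
  destruct (Rle_lt_dec x x') as [Hxx|Hxx].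
  - assert (HG : Gi x <= Gi x') by (apply Gi_mono; auto).
    assert (Hmm : Rmax y (Gi x) < Rmax y (Gi x')).
    { assert (Rmax y (Gi x) <= Rmax y (Gi x')).
      { apply Rmax_lub. apply Rmax_l. apply Rle_trans with (Gi x'); auto. apply Rmax_r. }
      destruct (Req_dec (Rmax y (Gi x)) (Rmax y (Gi x'))); [contradiction| lra]. }
    rewrite (Rmin_left (Rmax y (Gi x)) (Rmax y (Gi x'))), (Rmax_right (Rmax y (Gi x)) (Rmax y (Gi x'))) in Hxi by lra.
    assert (Hm' : Rmax y (Gi x') = Gi x').
    { unfold Rmax in *. destruct (Rle_dec y (Gi x')); auto. destruct (Rle_dec y (Gi x)); lra. }
    assert (Hx'0 : Fe 0 <= x').
    { destruct (Rlt_le_dec x' (Fe 0)); auto. assert (Gi x' = 0) by (apply Gi_lo; auto).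
      generalize (Rmax_l y (Gi x)). lra. }
    assert (Hxb : x <= Fe yb).
    { destruct (Rle_lt_dec x (Fe yb)); auto. rewrite (Gi_hi x) in Hmm by lra.
      generalize (Rmax_r y yb). lra. }
    assert (U : Fe xi <= x').
    { apply Rle_trans with (Fe (Gi x')). apply Fe_le; lra. apply FGi_le; auto. }
    assert (Lo : x <= Fe xi).
    { apply Rle_trans with (Fe (Gi x)). apply FGi_ge; auto. apply Fe_le; try lra.
      generalize (Rmax_r y (Gi x)). lra. }
    rewrite !Rabs_pos_eq by lra. lra.
  - assert (HG : Gi x' <= Gi x) by (apply Gi_mono; lra).
    assert (Hmm : Rmax y (Gi x') < Rmax y (Gi x)).
    { assert (Rmax y (Gi x') <= Rmax y (Gi x)).
      { apply Rmax_lub. apply Rmax_l. apply Rle_trans with (Gi x); auto. apply Rmax_r. }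
      destruct (Req_dec (Rmax y (Gi x')) (Rmax y (Gi x))). rewrite H0 in Hne; contradiction. lra. }
    rewrite (Rmin_right (Rmax y (Gi x)) (Rmax y (Gi x'))), (Rmax_left (Rmax y (Gi x)) (Rmax y (Gi x'))) in Hxi by lra.
    assert (Hm : Rmax y (Gi x) = Gi x).
    { unfold Rmax in *. destruct (Rle_dec y (Gi x)); auto. destruct (Rle_dec y (Gi x')); lra. }
    assert (Hx0 : Fe 0 <= x).
    { destruct (Rlt_le_dec x (Fe 0)); auto. assert (Gi x = 0) by (apply Gi_lo; auto).
      generalize (Rmax_l y (Gi x')). lra. }
    assert (Hxb : x' <= Fe yb).
    { destruct (Rle_lt_dec x' (Fe yb)); auto. rewrite (Gi_hi x') in Hmm by lra.
      generalize (Rmax_r y yb). lra. }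
    assert (U : Fe xi <= x).
    { apply Rle_trans with (Fe (Gi x)). apply Fe_le; lra. apply FGi_le; auto. }
    assert (Lo : x' <= Fe xi).
    { apply Rle_trans with (Fe (Gi x')). apply FGi_ge; auto. apply Fe_le; try lra.
      generalize (Rmax_r y (Gi x')). lra. }
    rewrite Rabs_left1 by lra. rewrite Rabs_left1 by lra. lra.
Qed.

Lemma bound_ab (f : R -> R) (a b : R) : a <= b -> (forall t, a <= t <= b -> continuous f t) ->
  exists B, 0 <= B /\ forall t, a <= t <= b -> Rabs (f t) <= B.
Proof.
  intros Hab Hcf.
  destruct (continuity_ab_maj (fun t => Rabs (f t)) a b Hab) as [m [Hm Hmr]].
  { intros c Hcr. apply continuity_pt_filterlim. apply (continuous_Rabs_comp f c). apply Hcf; auto. }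
  exists (Rabs (f m)). split. apply Rabs_pos. auto.
Qed.

Lemma Phi_bounds (X1 X2 : R) : X1 <= X2 -> exists L, 0 <= L /\ forall s xi, X1 <= s <= X2 -> 0 <= xi <= yb ->
  Rabs (Phixz s xi) <= L /\ Rabs (Phixxz s xi) <= L.
Proof.
  intros HX.
  destruct (bound_ab Ad 0 yb ltac:(lra) (fun t _ => Ad_c t)) as [BAd [HBAd HAd]].
  destruct (bound_ab Ae 0 yb ltac:(lra) (fun t _ => Ae_c t)) as [BAe [HBAe HAe]].
  assert (HX' : X1 <= X2 + be * yb) by nra.
  destruct (bound_ab (ps 1) X1 (X2 + be * yb) HX' (fun t _ => ps_c 1 t)) as [B1 [HB1 H1]].
  destruct (bound_ab (ps 2) X1 (X2 + be * yb) HX' (fun t _ => ps_c 2 t)) as [B2 [HB2 H2]].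
  destruct (bound_ab (ps 3) X1 (X2 + be * yb) HX' (fun t _ => ps_c 3 t)) as [B3 [HB3 H3]].
  assert (Hk1 : 0 < / (rh + ka)) by (apply Rinv_0_lt_compat; lra).
  exists (BAd * B1 + BAe * be * B2 + / (rh + ka) + BAd * B2 + BAe * be * B3).
  split. assert (0 <= BAd * B1) by nra. assert (0 <= BAe * be * B2) by (apply Rmult_le_pos; nra).
    assert (0 <= BAd * B2) by nra. assert (0 <= BAe * be * B3) by (apply Rmult_le_pos; nra). lra.
  intros s xi Hs0 Hxi.
  assert (Hsx : X1 <= s + be * xi <= X2 + be * yb) by (split; nra).
  specialize (HAd xi Hxi). specialize (HAe xi Hxi).
  specialize (H1 _ Hsx). specialize (H2 _ Hsx). specialize (H3 _ Hsx).
  assert (E1 : Rabs (Ad xi * ps 1 (s + be * xi)) <= BAd * B1)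
    by (rewrite Rabs_mult; apply Rmult_le_compat; auto; apply Rabs_pos).
  assert (E2 : Rabs (Ae xi * be * ps 2 (s + be * xi)) <= BAe * be * B2).
  { rewrite !Rabs_mult, (Rabs_pos_eq be) by lra. apply Rmult_le_compat; auto.
    apply Rmult_le_pos; [apply Rabs_pos| lra]. apply Rabs_pos. apply Rmult_le_compat_r; lra. }
  assert (E3 : Rabs (Ad xi * ps 2 (s + be * xi)) <= BAd * B2)
    by (rewrite Rabs_mult; apply Rmult_le_compat; auto; apply Rabs_pos).
  assert (E4 : Rabs (Ae xi * be * ps 3 (s + be * xi)) <= BAe * be * B3).
  { rewrite !Rabs_mult, (Rabs_pos_eq be) by lra. apply Rmult_le_compat; auto.
    apply Rmult_le_pos; [apply Rabs_pos| lra]. apply Rabs_pos. apply Rmult_le_compat_r; lra. }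
  assert (0 <= BAd * B1) by nra. assert (0 <= BAe * be * B2) by (apply Rmult_le_pos; nra).
  assert (0 <= BAd * B2) by nra. assert (0 <= BAe * be * B3) by (apply Rmult_le_pos; nra).
  unfold Phixz, Phixxz. split.
  - eapply Rle_trans. apply Rabs_triang. rewrite (Rabs_pos_eq (/ (rh + ka))) by lra.
    eapply Rle_trans. apply Rplus_le_compat_r. apply Rabs_triang. lra.
  - eapply Rle_trans. apply Rabs_triang. lra.
Qed.

Lemma Mxs_c (x y : R) : continuous (fun s => Mx s y) x.
Proof. apply (C2_to1 Mx (fun s => s) (fun s => y)). apply cR_id. apply cR_const. apply Mx_C2. Qed.

Lemma H3_gen (Q Qx : R -> R -> R) (x y L : R) : 0 <= y <= yb ->
  (forall s xi, is_derive (fun s => Q s xi) s (Qx s xi)) ->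
  (forall xi, 0 <= xi <= yb -> Q (Fe xi) xi = 0) ->
  (forall s xi, Rmin (x - 1) (Fe 0) <= s <= Rmax (x + 1) (Fe yb) -> 0 <= xi <= yb -> Rabs (Qx s xi) <= L) ->
  forall x' xi, Rabs (x' - x) <= 1 -> Mx x y <> Mx x' y ->
    Rmin (Mx x y) (Mx x' y) <= xi <= Rmax (Mx x y) (Mx x' y) ->
    Rabs (Q x' xi) <= L * Rabs (x' - x).
Proof.
  intros Hy Hd H0 HL x' xi Hx' Hne Hxi.
  destruct (order_lemma x x' y xi Hy Hne Hxi) as [Hxr Hord].
  destruct (MVT_abs (fun s => Q s xi) (fun s => Qx s xi) (Fe xi) x') as [c [Hcc Hcr]].
  { intros c _. apply is_derive_Reals. apply Hd. }
  rewrite H0 in Hcc by auto. rewrite Rminus_0_r in Hcc. rewrite Hcc.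
  assert (HF : Fe 0 <= Fe xi <= Fe yb) by (split; apply Fe_le; lra).
  assert (Hcr' : Rmin (x - 1) (Fe 0) <= c <= Rmax (x + 1) (Fe yb)).
  { apply Rabs_le_between' in Hx'. split.
    - apply Rle_trans with (Rmin (Fe xi) x'). apply Rmin_glb.
      apply Rle_trans with (Fe 0). apply Rmin_r. lra. apply Rle_trans with (x - 1). apply Rmin_l. lra. lra.
    - apply Rle_trans with (Rmax (Fe xi) x'). lra. apply Rmax_lub.
      apply Rle_trans with (Fe yb). lra. apply Rmax_r. apply Rle_trans with (x + 1). lra. apply Rmax_l. }
  specialize (HL c xi Hcr' Hxr).
  apply Rmult_le_compat; try apply Rabs_pos; auto.
Qed.

Lemma w_dx (x y : R) : 0 <= y <= yb ->
  is_derive (fun s => Phi s (Mx s y)) x (Phix x (Mx x y)) /\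
  is_derive (fun s => Phix s (Mx s y)) x (Phixx x (Mx x y)).
Proof.
  intros Hy.
  assert (HX : Rmin (x - 1) (Fe 0) <= Rmax (x + 1) (Fe yb)).
  { apply Rle_trans with (x - 1). apply Rmin_l. apply Rle_trans with (x + 1). lra. apply Rmax_l. }
  destruct (Phi_bounds _ _ HX) as [L [HL HLb]].
  split.
  - apply (key_lemma Phi Phix Phiz (fun s => Mx s y) x L HL).
    + apply Phi_dx.
    + intros; apply Phi_dz.
    + apply (H3_gen Phiz Phixz x y L Hy). apply Phiz_dx.
      intros xi Hxi. apply (smooth_fit xi Hxi).
      intros s xi Hs0 Hxi. apply (HLb s xi Hs0 Hxi).
    + apply Mxs_c.
  - apply (key_lemma Phix Phixx Phixz (fun s => Mx s y) x L HL).
    + apply Phix_dx.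
    + intros; apply Phix_dz.
    + apply (H3_gen Phixz Phixxz x y L Hy). apply Phixz_dx.
      intros xi Hxi. apply (smooth_fit xi Hxi).
      intros s xi Hs0 Hxi. apply (HLb s xi Hs0 Hxi).
    + apply Mxs_c.
Qed.

Lemma Afun_Ae (z : R) : 0 <= z <= yb -> Afun p Ft z = Ae z.
Proof. intros Hz. unfold Ae, Afun. rewrite Fte_in by auto. reflexivity. Qed.

Lemma Ae_yb : Ae yb = 0.
Proof.
  rewrite <- Afun_Ae by lra. unfold Afun. unfold Hfun in HH. rewrite HH. unfold Rdiv. ring.
Qed.

Lemma Mx_below (x t : R) : 0 <= t <= yb -> x < Fe t -> Mx x t = t.
Proof.
  intros Ht Hx. unfold Mx. apply Rmax_left.
  destruct (Rlt_le_dec x (Fe 0)). rewrite Gi_lo by auto. lra.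
  apply Fe_le_inv. apply Gi_range. auto. rewrite Fe_Gi. lra.
  split; auto. apply Rlt_le, Rlt_le_trans with (Fe t); auto. apply Fe_le; lra.
Qed.

Lemma Gi_above (x t : R) : 0 <= t <= yb -> Fe t <= x -> t <= Gi x.
Proof.
  intros Ht Hx. destruct (Rle_lt_dec (Fe yb) x). rewrite Gi_hi by auto. lra.
  apply Fe_le_inv. auto. apply Gi_range. rewrite Fe_Gi. auto.
  split. apply Rle_trans with (Fe t); auto. apply Fe_le; lra. lra.
Qed.

Lemma w_repr (x y : R) : 0 <= y <= yb -> wfun p Ft x y = Phi x (Mx x y) + cc * y.
Proof.
  intros Hy. unfold wfun. rewrite !xbar_eq.
  assert (HF0 : Fe 0 <= Fe y) by (apply Fe_le; lra).
  assert (HFy : Fe y <= Fe yb) by (apply Fe_le; lra).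
  destruct (Rlt_dec y yb) as [Hy1|Hy1].
  - rewrite <- (Fe_in y) by auto.
    destruct (Rlt_dec x (Fe y)) as [H1|H1].
    + rewrite Mx_below by auto. unfold Phi. rewrite Afun_Ae by auto. rewrite ps0_eq. ring.
    + destruct (Rlt_dec x (Fe yb)) as [H2|H2].
      * assert (HG : Gi x = Finv p Ft x).
        { unfold Gi. destruct Rlt_dec. lra. destruct Rlt_dec. auto. lra. }
        assert (Hz := Gi_range x). assert (Hzy := Gi_above x y Hy ltac:(lra)).
        unfold Mx. rewrite Rmax_right by auto. rewrite <- HG. unfold Phi.
        rewrite Afun_Ae by auto. rewrite ps0_eq. ring.
      * unfold Mx. rewrite Gi_hi by lra. rewrite Rmax_right by lra. unfold Phi. rewrite Ae_yb. ring.
  - assert (y = yb) by lra. subst y.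
    unfold Mx. rewrite Rmax_left by apply Gi_range.
    destruct (Rlt_dec x (Fe yb)).
    + unfold Phi. rewrite Afun_Ae by lra. rewrite ps0_eq. ring.
    + unfold Phi. rewrite Ae_yb. ring.
Qed.

Definition wx (x y : R) : R := Phix x (Mx x y).
Definition wxx (x y : R) : R := Phixx x (Mx x y).
Definition wy (x y : R) : R := cc + (if Rlt_dec x (Fe y) then Phiz x y else 0).

Lemma w_is_dx (x y : R) : 0 <= y <= yb -> is_derive (fun s => wfun p Ft s y) x (wx x y).
Proof.
  intros Hy. apply (dR_ext (fun s => Phi s (Mx s y) + cc * y)).
  intros s. rewrite w_repr by auto. reflexivity.
  eapply dR_eq. apply dR_plus. apply (w_dx x y Hy). apply dR_const. unfold wx. Rq. ring.
Qed.

Lemma wx_is_dx (x y : R) : 0 <= y <= yb -> is_derive (fun s => wx s y) x (wxx x y).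
Proof. intros Hy. apply (w_dx x y Hy). Qed.

Lemma w_dy (x y : R) : 0 <= y <= yb -> deriv_within (fun t => wfun p Ft x t) 0 yb y (wy x y).
Proof.
  intros Hy. apply dw_intro. intros eps Heps.
  assert (HPd := Phi_dz x y). apply is_derive_Reals in HPd.
  destruct (HPd eps Heps) as [d2 Hd2].
  unfold wy. destruct (Rlt_dec x (Fe y)) as [H1|H1].
  - (* inside the waiting region *)
    assert (HFc := Fe_c y). apply continuity_pt_filterlim in HFc.
    destruct (HFc (Fe y - x) ltac:(lra)) as [d1 [Hd1 HF1]].
    exists (Rmin d1 d2). split. apply Rmin_pos; auto. apply cond_pos.
    intros h Hh0 Hyh Hh. assert (Hm1 := Rmin_l d1 d2). assert (Hm2 := Rmin_r d1 d2).
    assert (Hx2 : x < Fe (y + h)).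
    { assert (Hd : dist R_met (Fe (y + h)) (Fe y) < Fe y - x).
      { apply HF1. split. split. exact I. intros E; apply Hh0; lra.
        change (Rabs (y + h - y) < d1). replace (y + h - y) with h by ring. lra. }
      change (Rabs (Fe (y + h) - Fe y) < Fe y - x) in Hd. apply Rabs_lt_between' in Hd. lra. }
    rewrite !w_repr by lra. rewrite !Mx_below by lra.
    replace ((Phi x (y + h) + cc * (y + h) - (Phi x y + cc * y)) / h - (cc + Phiz x y)) with
      ((Phi x (y + h) - Phi x y) / h - Phiz x y) by (field; auto).
    apply Hd2; auto. lra.
  - assert (Hg := Gi_above x y Hy ltac:(lra)).
    assert (Hgr := Gi_range x).
    assert (HMy : Mx x y = Gi x) by (unfold Mx; apply Rmax_right; auto).
    destruct (Req_dec (Gi x) y) as [Heq|Hne].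
    + (* on the free boundary *)
      exists d2. split. apply cond_pos. intros h Hh0 Hyh Hh.
      rewrite !w_repr by lra. rewrite HMy.
      destruct (Rle_lt_dec (y + h) (Gi x)) as [Hle|Hlt].
      * assert (Mx x (y + h) = Gi x) by (unfold Mx; apply Rmax_right; auto). rewrite H.
        replace ((Phi x (Gi x) + cc * (y + h) - (Phi x (Gi x) + cc * y)) / h - (cc + 0)) with 0 by (field; auto).
        rewrite Rabs_R0; auto.
      * assert (Mx x (y + h) = y + h) by (unfold Mx; apply Rmax_left; lra). rewrite H.
        assert (Hxb : x <= Fe yb).
        { destruct (Rle_lt_dec x (Fe yb)); auto. rewrite Gi_hi in Hlt by lra. lra. }
        assert (Hxf : x = Fe y).
        { rewrite <- Heq. rewrite Fe_Gi; auto. split; auto. apply Rle_trans with (Fe y). apply Fe_le; lra. lra. }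
        assert (HZ : Phiz x y = 0) by (rewrite Hxf; apply (smooth_fit y Hy)).
        rewrite Heq.
        replace ((Phi x (y + h) + cc * (y + h) - (Phi x y + cc * y)) / h - (cc + 0)) with
          ((Phi x (y + h) - Phi x y) / h - Phiz x y) by (rewrite HZ; field; auto).
        apply Hd2; auto.
    + exists (Gi x - y). split. lra. intros h Hh0 Hyh Hh. apply Rabs_lt_between in Hh.
      rewrite !w_repr by lra. rewrite HMy.
      assert (Mx x (y + h) = Gi x) by (unfold Mx; apply Rmax_right; lra). rewrite H.
      replace ((Phi x (Gi x) + cc * (y + h) - (Phi x (Gi x) + cc * y)) / h - (cc + 0)) with 0 by (field; auto).
      rewrite Rabs_R0; auto.
Qed.

Lemma paste_C2 (phi : R -> R -> R) (F : R -> R) (x0 y0 : R) :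
  C2 phi x0 y0 -> continuous F y0 -> (x0 = F y0 -> phi x0 y0 = 0) ->
  C2 (fun x y => if Rlt_dec x (F y) then phi x y else 0) x0 y0.
Proof.
  intros Hphi HF Hz. apply C2_intro. intros eps Heps.
  destruct (C2_elim phi x0 y0 Hphi eps Heps) as [d1 [Hd1 H1]].
  assert (HG : C2 (fun x y => F y - x) x0 y0).
  { apply C2_minus. apply (C2_ofy F). auto. apply C2_fst. }
  destruct (Req_dec x0 (F y0)) as [E|E].
  - specialize (Hz E).
    exists d1. split; auto. intros x' y' Hx' Hy'. specialize (H1 x' y' Hx' Hy'). rewrite Hz in H1.
    destruct (Rlt_dec x0 (F y0)). lra. destruct (Rlt_dec x' (F y')).
    + rewrite Rminus_0_r in *. auto.
    + rewrite Rminus_diag, Rabs_R0. auto.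
  - assert (Hgap : 0 < Rabs (F y0 - x0)) by (apply Rabs_pos_lt; lra).
    destruct (C2_elim _ x0 y0 HG _ Hgap) as [d2 [Hd2 H2]].
    exists (Rmin d1 d2). split. apply Rmin_pos; auto. intros x' y' Hx' Hy'.
    assert (Hm1 := Rmin_l d1 d2). assert (Hm2 := Rmin_r d1 d2).
    specialize (H2 x' y' ltac:(lra) ltac:(lra)).
    specialize (H1 x' y' ltac:(lra) ltac:(lra)).
    destruct (Rlt_dec x0 (F y0)) as [L0|L0]; destruct (Rlt_dec x' (F y')) as [L1|L1]; auto.
    + rewrite (Rabs_pos_eq (F y0 - x0)) in H2 by lra. apply Rabs_lt_between' in H2. lra.
    + rewrite (Rabs_left1 (F y0 - x0)) in H2 by lra. apply Rabs_lt_between' in H2. lra.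
    + rewrite Rminus_diag, Rabs_R0. auto.
Qed.

Theorem main_C21 : C21_strip (wfun p Ft) yb.
Proof.
  exists wx, wxx, wy. split; [| split; [| split; [| split]]].
  - intros x y Hy. split; [| split].
    + apply w_is_dx; auto.
    + apply wx_is_dx; auto.
    + apply w_dy; auto.
  - apply (cont_strip_of _ (fun x y => Phi x (Mx x y) + cc * y)).
    + intros x y Hy. apply C2_plus. apply (C2_comp2 Phi (fun x y => x) Mx). apply C2_fst. apply Mx_C2.
      apply Phi_C2. apply C2_mult. apply C2_const. apply C2_snd.
    + intros x y Hy. apply w_repr; auto.
  - apply (cont_strip_of _ wx). 2: auto.
    intros x y Hy. unfold wx. apply (C2_comp2 Phix (fun x y => x) Mx). apply C2_fst. apply Mx_C2. apply Phix_C2.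
  - apply (cont_strip_of _ wxx). 2: auto.
    intros x y Hy. unfold wxx. apply (C2_comp2 Phixx (fun x y => x) Mx). apply C2_fst. apply Mx_C2. apply Phixx_C2.
  - apply (cont_strip_of _ wy). 2: auto.
    intros x y Hy. unfold wy. apply C2_plus. apply C2_const.
    apply (paste_C2 Phiz Fe). apply Phiz_C2. apply Fe_c.
    intros E. rewrite E. apply (smooth_fit y Hy).
Qed.

End Main.

Theorem lemma4p6 (p : Params) :
  0 < p_kappa p -> 0 < p_sigma p -> 0 < p_rho p -> 0 < p_beta p -> 0 <= p_c p -> 0 < p_ybar p ->
  forall Ft : R -> R,
    Hfun p (Ft (p_ybar p)) = 0 ->
    (forall y, 0 <= y <= p_ybar p ->
       Dfun p y (Ft y) <> 0 /\ deriv_within Ft 0 (p_ybar p) y (Gfun p y (Ft y))) ->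
    (forall y1 y2, 0 <= y1 -> y1 < y2 -> y2 <= p_ybar p -> Ffun p Ft y1 < Ffun p Ft y2) ->
    C21_strip (wfun p Ft) (p_ybar p).
Proof.
  intros Hk Hs Hr Hb Hc Hyb Ft HH HODE Hmono.
  apply main_C21; assumption.
Qed.
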